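(* Let $X_1,X_2,\dots$ be iid with continuous distribution function $F\in\mathcal{D}(G)$ with norming constants $a_n>0$, $b_n\in\mathbb{R}$. Let $j=j(n)<k=k(n)$ be integers with $j/n\to\lambda_1>0$ and $k/n\to\lambda_2>\lambda_1$, and put $\beta_i=\lambda_i/(\lambda_2-\lambda_1)$, $i=1,2$. Then for all $y_1,y_2\in\mathbb{R}$, \[ \lim_{n\to\infty}\Pr\left(\frac{X_j-b_n}{a_n}\le y_1,\ \frac{X_k-b_n}{a_n}\le y_2\ \Big|\ X_j\text{ and }X_k\text{ are records}\right)=G_{\lambda_1,\lambda_2}(y_1,y_2), \] where \[ G_{\lambda_1,\lambda_2}(y_1,y_2)=\begin{cases} G(y_1)^{\lambda_1}\left(\beta_2G(y_2)^{\lambda_2-\lambda_1}-\beta_1G(y_1)^{\lambda_2-\lambda_1}\right), & \text{if } y_1<y_2,\\ G(y_2)^{\lambda_2}, & \text{if } y_1\ge y_2. \end{cases} \]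
   Context: $X_m$ is a record if $X_m>\max(X_1,\dots,X_{m-1})$; $X_1$ is always a record. $F\in\mathcal{D}(G)$ means $F^n(a_nx+b_n)\to G(x)$ as $n\to\infty$ for all $x$, where $G$ is a non-degenerate (hence continuous, extreme value) distribution function. *)

(* Defs.v *)
From Stdlib Require Import Reals Lra.
Open Scope R_scope.

Record ProbSpace (Omega : Type) := {
  meas : (Omega -> Prop) -> Prop;
  prob : (Omega -> Prop) -> R;
  meas_full : meas (fun _ => True);
  meas_compl : forall A, meas A -> meas (fun w => ~ A w);
  meas_cunion : forall A : nat -> Omega -> Prop,
      (forall n, meas (A n)) -> meas (fun w => exists n, A n w);
  prob_nonneg : forall A, meas A -> 0 <= prob A;
  prob_full : prob (fun _ => True) = 1;
  prob_sigma_additive : forall A : nat -> Omega -> Prop,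
      (forall n, meas (A n)) ->
      (forall n m w, n <> m -> A n w -> A m w -> False) ->
      infinite_sum (fun n => prob (A n)) (prob (fun w => exists n, A n w))
}.
Arguments meas {Omega} _ _.
Arguments prob {Omega} _ _.

Fixpoint prod1n (f : nat -> R) (n : nat) : R :=
  match n with O => 1 | S m => prod1n f m * f (S m) end.

Definition iid_with_cdf {Omega} (S : ProbSpace Omega) (X : nat -> Omega -> R)
    (F : R -> R) : Prop :=
  (forall i x, meas S (fun w => X i w <= x)) /\
  (forall (n : nat) (x : nat -> R),
      prob S (fun w => forall i, (1 <= i <= n)%nat -> X i w <= x i)
      = prod1n (fun i => F (x i)) n).

(* X_m is a record (indices start at 1; X_1 is always a record). *)
Definition is_record {Omega} (X : nat -> Omega -> R) (m : nat) (w : Omega) : Prop :=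
  forall i, (1 <= i < m)%nat -> X i w < X m w.

Definition cond_prob {Omega} (S : ProbSpace Omega) (A B : Omega -> Prop) : R :=
  prob S (fun w => A w /\ B w) / prob S B.

Definition distribution_function (G : R -> R) : Prop :=
  (forall x y, x <= y -> G x <= G y) /\
  (forall x, forall eps, eps > 0 -> exists d, d > 0 /\
       forall y, x <= y < x + d -> Rabs (G y - G x) < eps) /\
  (forall eps, eps > 0 -> exists M, forall x, x <= M -> Rabs (G x) < eps) /\
  (forall eps, eps > 0 -> exists M, forall x, x >= M -> Rabs (G x - 1) < eps).

Definition non_degenerate (G : R -> R) : Prop := exists x, 0 < G x < 1.

Definition in_domain_of_attraction (F G : R -> R) (a b : nat -> R) : Prop :=
  (forall n, 0 < a n) /\
  (forall x, Un_cv (fun n => (F (a n * x + b n)) ^ n) (G x)).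

(* real power x^p for x >= 0, with the convention 0^p = 0 (p > 0) *)
Definition rpow (x p : R) : R := if Rle_dec x 0 then 0 else Rpower x p.

Definition G_lim (G : R -> R) (l1 l2 y1 y2 : R) : R :=
  let b1 := l1 / (l2 - l1) in
  let b2 := l2 / (l2 - l1) in
  if Rlt_dec y1 y2 then
    rpow (G y1) l1 * (b2 * rpow (G y2) (l2 - l1) - b1 * rpow (G y1) (l2 - l1))
  else rpow (G y2) l2.

(* Submission.v *)
Require Import Defs.
From Stdlib Require Import Reals Lra Lia ZArith Setoid ClassicalEpsilon FunctionalExtensionality PropExtensionality.
Open Scope R_scope.

Lemma ev_ext {Omega} (A B : Omega -> Prop) : (forall w, A w <-> B w) -> A = B.
Proof. intros H; apply functional_extensionality; intro w; apply propositional_extensionality; auto. Qed.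

Section Prob.
Context {Omega : Type} (Sp : ProbSpace Omega).
Notation P := (prob Sp).
Notation M := (meas Sp).

Lemma meas_empty : M (fun _ => False).
Proof.
  replace (fun _ : Omega => False) with (fun w : Omega => ~ True) by (apply ev_ext; tauto).
  apply meas_compl, meas_full.
Qed.

Lemma meas_or (A B : Omega -> Prop) : M A -> M B -> M (fun w => A w \/ B w).
Proof.
  intros HA HB.
  replace (fun w => A w \/ B w) with (fun w => exists n, (match n with O => A | _ => B end) w).
  - apply meas_cunion; intros [|n]; auto.
  - apply ev_ext; intro w; split.
    + intros [[|n] H]; auto.
    + intros [H|H]; [exists O|exists 1%nat]; auto.
Qed.

Lemma meas_and (A B : Omega -> Prop) : M A -> M B -> M (fun w => A w /\ B w).
Proof.
  intros HA HB.
  replace (fun w => A w /\ B w) with (fun w => ~ ((~ A w) \/ (~ B w))).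
  - apply meas_compl, meas_or; apply meas_compl; auto.
  - apply ev_ext; intro w; destruct (Classical_Prop.classic (A w)); destruct (Classical_Prop.classic (B w)); tauto.
Qed.

Lemma meas_not (A : Omega -> Prop) : M A -> M (fun w => ~ A w).
Proof. apply meas_compl. Qed.

Lemma P_empty : P (fun _ => False) = 0.
Proof.
  pose proof (prob_sigma_additive _ Sp (fun _ _ => False) (fun _ => meas_empty) (fun _ _ _ _ f _ => f)) as H.
  cbv beta in H.
  replace (fun w : Omega => exists _ : nat, False) with (fun _ : Omega => False) in H
    by (apply ev_ext; intros w; split; [tauto| intros [_ []]]).
  set (c := P (fun _ => False)) in *.
  assert (Hs : forall n, sum_f_R0 (fun _ => c) n = INR (S n) * c).
  { induction n; simpl sum_f_R0; [simpl; ring|rewrite IHn; rewrite !S_INR; ring]. }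
  assert (Hc : 0 <= c) by (apply prob_nonneg, meas_empty).
  destruct (Req_dec c 0) as [E|E]; auto.
  destruct (H (c/2)) as [N HN]; [lra|].
  specialize (HN (S N) (Nat.le_succ_diag_r N)).
  rewrite Hs in HN. unfold R_dist in HN.
  rewrite !S_INR in HN. pose proof (pos_INR N).
  rewrite Rabs_right in HN; nra.
Qed.

Lemma infsum_eventually (a : nat -> R) m :
  (forall n, (n > m)%nat -> a n = 0) -> infinite_sum a (sum_f_R0 a m).
Proof.
  intros Ha eps Heps. exists m. intros n Hn.
  assert (sum_f_R0 a n = sum_f_R0 a m).
  { induction Hn; auto. simpl. rewrite IHHn, Ha; [ring|lia]. }
  rewrite H; unfold R_dist; rewrite Rminus_diag, Rabs_R0; auto.
Qed.

Lemma P_fin_union (A : nat -> Omega -> Prop) m :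
  (forall n, M (A n)) ->
  (forall n n' w, n <> n' -> A n w -> A n' w -> False) ->
  (forall n w, (n > m)%nat -> ~ A n w) ->
  P (fun w => exists n, A n w) = sum_f_R0 (fun n => P (A n)) m.
Proof.
  intros HM HD HZ.
  apply (uniqueness_sum (fun n => P (A n))); [apply prob_sigma_additive; auto|].
  apply infsum_eventually. intros n Hn.
  replace (A n) with (fun _ : Omega => False) by (apply ev_ext; intro w; split; [tauto|apply HZ; auto]).
  apply P_empty.
Qed.

Lemma P_add2 (A B : Omega -> Prop) : M A -> M B -> (forall w, A w -> B w -> False) ->
  P (fun w => A w \/ B w) = P A + P B.
Proof.
  intros HA HB HD.
  pose (C := fun n : nat => match n with O => A | 1%nat => B | _ => fun _ => False end).
  replace (fun w => A w \/ B w) with (fun w => exists n, C n w).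
  - rewrite (P_fin_union C 1).
    + simpl; ring.
    + intros [|[|n]]; simpl; auto. apply meas_empty.
    + intros [|[|n]] [|[|n']] w H; simpl; intros; try lia; eauto.
    + intros [|[|n]] w H; simpl; auto; lia.
  - apply ev_ext; intro w; split.
    + intros [[|[|n]] H]; simpl in H; tauto.
    + intros [H|H]; [exists O|exists 1%nat]; auto.
Qed.

Lemma P_compl (A : Omega -> Prop) : M A -> P (fun w => ~ A w) = 1 - P A.
Proof.
  intros HA. rewrite <- (prob_full _ Sp).
  replace (fun _ : Omega => True) with (fun w => A w \/ ~ A w)
    by (apply ev_ext; intros w; split; auto; intros _; apply Classical_Prop.classic).
  rewrite P_add2; auto; [ring|apply meas_compl; auto].
Qed.

Lemma P_ge0 (A : Omega -> Prop) : M A -> 0 <= P A.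
Proof. apply prob_nonneg. Qed.

Lemma P_split (A B : Omega -> Prop) : M A -> M B ->
  P A = P (fun w => A w /\ B w) + P (fun w => A w /\ ~ B w).
Proof.
  intros HA HB. rewrite <- P_add2.
  - f_equal. apply ev_ext; intro w. destruct (Classical_Prop.classic (B w)); tauto.
  - apply meas_and; auto.
  - apply meas_and; auto; apply meas_not; auto.
  - tauto.
Qed.

Lemma P_mono (A B : Omega -> Prop) : M A -> M B -> (forall w, A w -> B w) -> P A <= P B.
Proof.
  intros HA HB H. rewrite (P_split B A); auto.
  replace (fun w => B w /\ A w) with A by (apply ev_ext; intro w; split; auto; tauto).
  pose proof (P_ge0 (fun w => B w /\ ~ A w) (meas_and _ _ HB (meas_not _ HA))). lra.
Qed.

Lemma P_le1 (A : Omega -> Prop) : M A -> P A <= 1.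
Proof. intros; rewrite <- (prob_full _ Sp); apply P_mono; auto; apply meas_full. Qed.

Lemma P_sub2 (A B : Omega -> Prop) : M A -> M B -> P (fun w => A w \/ B w) <= P A + P B.
Proof.
  intros HA HB.
  replace (fun w => A w \/ B w) with (fun w => A w \/ (B w /\ ~ A w)).
  - rewrite P_add2; auto.
    + pose proof (P_mono (fun w => B w /\ ~ A w) B). 
      assert (P (fun w => B w /\ ~ A w) <= P B) by (apply H; [apply meas_and; auto; apply meas_not; auto|auto|tauto]). lra.
    + apply meas_and; auto; apply meas_not; auto.
    + tauto.
  - apply ev_ext; intro w; destruct (Classical_Prop.classic (A w)); tauto.
Qed.

Lemma P_null_and (A N : Omega -> Prop) : M A -> M N -> P (fun w => ~ N w) = 0 ->
  P A = P (fun w => A w /\ N w).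
Proof.
  intros HA HN H0. rewrite (P_split A N); auto.
  assert (P (fun w => A w /\ ~ N w) <= 0).
  { rewrite <- H0. apply P_mono; try tauto. apply meas_and; auto; apply meas_not; auto. apply meas_not; auto. }
  pose proof (P_ge0 (fun w => A w /\ ~ N w) (meas_and _ _ HA (meas_not _ HN))). lra.
Qed.

Lemma P_eq_ext (A B : Omega -> Prop) : (forall w, A w <-> B w) -> P A = P B.
Proof. intros H; rewrite (ev_ext A B H); auto. Qed.

Lemma cont_below (A : nat -> Omega -> Prop) :
  (forall n, M (A n)) -> (forall n w, A n w -> A (S n) w) ->
  Un_cv (fun n => P (A n)) (P (fun w => exists n, A n w)).
Proof.
  intros HM Hinc.
  pose (D := fun n w => match n with O => A O w | S m => A (S m) w /\ ~ A m w end).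
  assert (HDM : forall n, M (D n)) by (intros [|n]; unfold D; auto; apply meas_and; auto; apply meas_not; auto).
  assert (Hmono : forall n m w, (n <= m)%nat -> A n w -> A m w) by (intros n m w H; induction H; auto).
  assert (HU : forall n, P (A n) = sum_f_R0 (fun i => P (D i)) n).
  { induction n; simpl; auto.
    rewrite <- IHn. rewrite (P_split (A (S n)) (A n)); auto.
    replace (fun w => A (S n) w /\ A n w) with (A n) by (apply ev_ext; intro w; split; auto; tauto).
    auto. }
  assert (Hall : (fun w => exists n, A n w) = (fun w => exists n, D n w)).
  { apply ev_ext; intro w; split.
    - intros [n Hn]. induction n.
      + exists O; auto.
      + destruct (Classical_Prop.classic (A n w)); auto. exists (S n); simpl; auto.
    - intros [[|n] Hn]; simpl in Hn; [exists O|exists (S n)]; tauto. }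
  rewrite Hall.
  pose proof (prob_sigma_additive _ Sp D HDM) as Hs.
  assert (Hd : forall n m w, n <> m -> D n w -> D m w -> False).
  { intros n m w Hnm. 
    assert (forall n m, (n < m)%nat -> D n w -> D m w -> False).
    { intros n0 m0 Hlt H1 H2. destruct m0 as [|m0]; [lia|]. simpl in H2. destruct H2 as [_ H2].
      apply H2. apply (Hmono n0); [lia|]. destruct n0; simpl in H1; tauto. }
    destruct (Nat.lt_gt_cases n m) as [[H1|H1] _]; auto; intros; eauto. }
  specialize (Hs Hd).
  intros eps Heps. destruct (Hs eps Heps) as [N HN]. exists N. intros n Hn.
  rewrite HU. apply HN; auto.
Qed.

End Prob.

Definition pred_ext (A B : (nat -> R) -> Prop) : (forall x, A x <-> B x) -> A = B := ev_ext A B.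

Definition rect (N : nat) (c : nat -> R) (x : nat -> R) : Prop :=
  forall i, (1 <= i <= N)%nat -> x i <= c i.

Definition lamsys (L : ((nat -> R) -> Prop) -> Prop) : Prop :=
  L (fun _ => True) /\ (forall f, L f -> L (fun x => ~ f x)) /\
  (forall fs : nat -> (nat -> R) -> Prop, (forall n, L (fs n)) ->
     (forall n m x, n <> m -> fs n x -> fs m x -> False) -> L (fun x => exists n, fs n x)).

Definition dsys (N : nat) (f : (nat -> R) -> Prop) : Prop :=
  forall L, lamsys L -> (forall c, L (rect N c)) -> L f.

Section Dynkin.
Variable N : nat.
Notation D := (dsys N).

Lemma dsys_lam : lamsys D.
Proof.
  split; [|split].
  - intros L HL _; apply HL.
  - intros f Hf L HL HR. apply HL. apply Hf; auto.
  - intros fs Hfs Hd L HL HR. apply HL; auto. intros n; apply Hfs; auto.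
Qed.

Lemma dsys_rect c : D (rect N c).
Proof. intros L HL HR; auto. Qed.

Lemma dsys_True : D (fun _ => True).
Proof. apply dsys_lam. Qed.

Lemma dsys_not f : D f -> D (fun x => ~ f x).
Proof. apply dsys_lam. Qed.

Lemma dsys_False : D (fun _ => False).
Proof.
  replace (fun _ : nat -> R => False) with (fun x : nat -> R => ~ (fun _ => True) x)
    by (apply pred_ext; tauto).
  apply dsys_not, dsys_True.
Qed.

Lemma dsys_or_disj f g : D f -> D g -> (forall x, f x -> g x -> False) -> D (fun x => f x \/ g x).
Proof.
  intros Hf Hg Hd.
  pose (C := fun n : nat => match n with O => f | 1%nat => g | _ => fun _ => False end).
  replace (fun x => f x \/ g x) with (fun x => exists n, C n x).
  - apply dsys_lam.
    + intros [|[|n]]; simpl; auto. apply dsys_False.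
    + intros [|[|n]] [|[|n']] x H; simpl; intros; try lia; eauto.
  - apply pred_ext; intro x; split.
    + intros [[|[|n]] H]; simpl in H; tauto.
    + intros [H|H]; [exists O|exists 1%nat]; auto.
Qed.

Lemma lam_and f : D f -> lamsys (fun g => D (fun x => g x /\ f x)).
Proof.
  intros Hf. split; [|split].
  - replace (fun x => True /\ f x) with f by (apply pred_ext; tauto). auto.
  - intros g Hg.
    replace (fun x => ~ g x /\ f x) with (fun x => ~ ((fun y => (g y /\ f y) \/ ~ f y) x)).
    + apply dsys_not, dsys_or_disj; auto. apply dsys_not; auto. tauto.
    + apply pred_ext; intro x; destruct (Classical_Prop.classic (g x)); destruct (Classical_Prop.classic (f x)); tauto.
  - intros fs Hfs Hd.
    replace (fun x => (exists n, fs n x) /\ f x) with (fun x => exists n, (fun y => fs n y /\ f y) x).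
    + apply dsys_lam; auto. intros n m x Hnm [H1 _] [H2 _]; eauto.
    + apply pred_ext; intro x; split; [intros [n [H1 H2]]; split; eauto|intros [[n H1] H2]; exists n; auto].
Qed.

Lemma rect_and c c' : (fun x => rect N c x /\ rect N c' x) = rect N (fun i => Rmin (c i) (c' i)).
Proof.
  apply pred_ext; intro x; unfold rect; split.
  - intros [H1 H2] i Hi. apply Rmin_glb; auto.
  - intros H; split; intros i Hi; specialize (H i Hi);
      [apply (Rle_trans _ _ _ H (Rmin_l _ _))|apply (Rle_trans _ _ _ H (Rmin_r _ _))].
Qed.

Lemma dsys_and_rect c g : D g -> D (fun x => g x /\ rect N c x).
Proof.
  intros Hg. apply Hg; [apply lam_and, dsys_rect|].
  intros c'. rewrite rect_and. apply dsys_rect.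
Qed.

Lemma dsys_and f g : D f -> D g -> D (fun x => f x /\ g x).
Proof.
  intros Hf Hg. apply Hf; [apply lam_and; auto|].
  intros c.
  replace (fun x => rect N c x /\ g x) with (fun x => g x /\ rect N c x) by (apply pred_ext; tauto).
  apply dsys_and_rect; auto.
Qed.

Lemma dsys_or f g : D f -> D g -> D (fun x => f x \/ g x).
Proof.
  intros Hf Hg.
  replace (fun x => f x \/ g x) with (fun x => ~ ((fun y => ~ f y /\ ~ g y) x)).
  - apply dsys_not, dsys_and; apply dsys_not; auto.
  - apply pred_ext; intro x; destruct (Classical_Prop.classic (f x)); tauto.
Qed.

Lemma dsys_all_lt (fs : nat -> (nat -> R) -> Prop) n : (forall m, D (fs m)) ->
  D (fun x => forall m, (m < n)%nat -> fs m x).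
Proof.
  intros H. induction n.
  - replace (fun x => forall m, (m < 0)%nat -> fs m x) with (fun _ : nat -> R => True)
      by (apply pred_ext; intro x; split; auto; intros; lia). apply dsys_True.
  - replace (fun x => forall m, (m < S n)%nat -> fs m x) with (fun x => (forall m, (m < n)%nat -> fs m x) /\ fs n x).
    + apply dsys_and; auto.
    + apply pred_ext; intro x; split.
      * intros [H1 H2] m Hm. destruct (Nat.eq_dec m n); subst; auto. apply H1; lia.
      * intros H1; split; auto.
Qed.

Lemma dsys_cunion (fs : nat -> (nat -> R) -> Prop) : (forall n, D (fs n)) ->
  D (fun x => exists n, fs n x).
Proof.
  intros H.
  pose (gs := fun n x => fs n x /\ forall m, (m < n)%nat -> ~ fs m x).
  replace (fun x => exists n, fs n x) with (fun x => exists n, gs n x).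
  - apply dsys_lam.
    + intros n. apply dsys_and; auto. apply dsys_all_lt. intros; apply dsys_not; auto.
    + intros n m x Hnm [H1 H2] [H3 H4].
      destruct (Nat.lt_gt_cases n m) as [[Hl|Hl] _]; auto; [apply (H4 n)|apply (H2 m)]; auto.
  - apply pred_ext; intro x; split.
    + intros [n [Hn _]]; eauto.
    + intros [n Hn].
      induction n as [n IH] using (well_founded_induction Wf_nat.lt_wf).
      destruct (Classical_Prop.classic (exists m, (m < n)%nat /\ fs m x)) as [[m [Hm1 Hm2]]|Hno].
      * apply (IH m); auto.
      * exists n; split; auto. intros m Hm Hf; apply Hno; eauto.
Qed.

Lemma dsys_all_range (fs : nat -> (nat -> R) -> Prop) a b : (forall m, D (fs m)) ->
  D (fun x => forall m, (a <= m <= b)%nat -> fs m x).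
Proof.
  intros H.
  replace (fun x => forall m, (a <= m <= b)%nat -> fs m x)
    with (fun x => forall m, (m < S b)%nat -> (fun y => (a <= m)%nat -> fs m y) x).
  - apply dsys_all_lt. intros m. destruct (Compare_dec.le_dec a m).
    + replace (fun y => (a <= m)%nat -> fs m y) with (fs m) by (apply pred_ext; intro y; split; auto). auto.
    + replace (fun y => (a <= m)%nat -> fs m y) with (fun _ : nat -> R => True) by (apply pred_ext; intro y; split; auto; intros; lia).
      apply dsys_True.
  - apply pred_ext; intro x; split; intros H1 m Hm; cbv beta in *; [apply H1; lia| intro; apply H1; lia].
Qed.

Lemma dsys_ex_range (fs : nat -> (nat -> R) -> Prop) a b : (forall m, D (fs m)) ->
  D (fun x => exists m, (a <= m <= b)%nat /\ fs m x).
Proof.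
  intros H.
  replace (fun x => exists m, (a <= m <= b)%nat /\ fs m x) with
    (fun x => exists m, (fun y => (a <= m <= b)%nat /\ fs m y) x) by auto.
  apply dsys_cunion. intros m. destruct (Compare_dec.le_dec a m); destruct (Compare_dec.le_dec m b).
  - replace (fun y => (a <= m <= b)%nat /\ fs m y) with (fs m) by (apply pred_ext; intro y; split; [intros; split; auto|tauto]). auto.
  - replace (fun y => (a <= m <= b)%nat /\ fs m y) with (fun _ : nat -> R => False) by (apply pred_ext; intro y; split; [tauto|intros [? ?]; lia]). apply dsys_False.
  - replace (fun y => (a <= m <= b)%nat /\ fs m y) with (fun _ : nat -> R => False) by (apply pred_ext; intro y; split; [tauto|intros [? ?]; lia]). apply dsys_False.
  - replace (fun y => (a <= m <= b)%nat /\ fs m y) with (fun _ : nat -> R => False) by (apply pred_ext; intro y; split; [tauto|intros [? ?]; lia]). apply dsys_False.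
Qed.

Lemma bounded_nat (x : nat -> R) n : exists m : nat, forall l, (l <= n)%nat -> x l <= INR m.
Proof.
  induction n.
  - destruct (archimed (Rabs (x O))) as [H1 H2].
    exists (Z.to_nat (up (Rabs (x O)))). intros l Hl. assert (l = O) by lia; subst.
    rewrite INR_IZR_INZ, Z2Nat.id.
    + pose proof (Rle_abs (x O)); lra.
    + apply le_IZR. pose proof (Rabs_pos (x O)); lra.
  - destruct IHn as [m Hm]. destruct (archimed (Rabs (x (S n)))) as [H1 H2].
    exists (Nat.max m (Z.to_nat (up (Rabs (x (S n)))))). intros l Hl.
    destruct (Nat.eq_dec l (S n)).
    + subst. apply Rle_trans with (INR (Z.to_nat (up (Rabs (x (S n)))))).
      * rewrite INR_IZR_INZ, Z2Nat.id.
        -- pose proof (Rle_abs (x (S n))); lra.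
        -- apply le_IZR. pose proof (Rabs_pos (x (S n))); lra.
      * apply le_INR; lia.
    + apply Rle_trans with (INR m); [apply Hm; lia|apply le_INR; lia].
Qed.

Lemma dsys_le i c : (1 <= i <= N)%nat -> D (fun x => x i <= c).
Proof.
  intros Hi.
  replace (fun x => x i <= c) with
    (fun x => exists m : nat, rect N (fun l => if Nat.eqb l i then c else INR m) x).
  - apply dsys_cunion; intros; apply dsys_rect.
  - apply pred_ext; intro x; split.
    + intros [m Hm]. specialize (Hm i Hi). cbv beta in Hm. rewrite Nat.eqb_refl in Hm; auto.
    + intros H. destruct (bounded_nat x N) as [m Hm]. exists m. intros l Hl.
      destruct (Nat.eqb_spec l i); subst; auto. apply Hm; lia.
Qed.

Definition qr (p z1 z2 : nat) : R := (INR z1 - INR z2) / INR (S p).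

Lemma q_dense a b : a < b -> exists p z1 z2, a < qr p z1 z2 < b.
Proof.
  intros Hab.
  destruct (archimed (/ (b - a))) as [H1 _].
  set (p := Z.to_nat (up (/ (b - a)))).
  assert (Hp : / (b - a) < INR (S p)).
  { rewrite S_INR. unfold p. rewrite INR_IZR_INZ, Z2Nat.id; [lra|].
    apply le_IZR. assert (0 < / (b-a)) by (apply Rinv_0_lt_compat; lra). lra. }
  assert (HS : 0 < INR (S p)) by (apply lt_0_INR; lia).
  set (t := a * INR (S p)).
  destruct (archimed t) as [H3 H4].
  set (z := up t).
  exists p, (Z.to_nat z), (Z.to_nat (- z)).
  assert (Hz : INR (Z.to_nat z) - INR (Z.to_nat (- z)) = IZR z).
  { rewrite !INR_IZR_INZ. rewrite <- minus_IZR. f_equal. lia. }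
  unfold qr; rewrite Hz. split.
  - apply Rmult_lt_reg_r with (INR (S p)); auto. unfold Rdiv. rewrite Rmult_assoc, Rinv_l. 2: lra. unfold z, t in *; lra.
  - apply Rmult_lt_reg_r with (INR (S p)); auto. unfold Rdiv. rewrite Rmult_assoc, Rinv_l; [|lra].
    assert (1 < (b - a) * INR (S p)).
    { apply Rmult_lt_reg_l with (/ (b - a)). apply Rinv_0_lt_compat; lra.
      rewrite <- Rmult_assoc, Rinv_l; lra. }
    unfold z, t in *; lra.
Qed.

Lemma dsys_lt i l : (1 <= i <= N)%nat -> (1 <= l <= N)%nat -> D (fun x => x i < x l).
Proof.
  intros Hi Hl.
  replace (fun x => x i < x l) with
    (fun x => exists p, (fun y => exists z1, (fun y' => exists z2,
        (fun y'' => y'' i <= qr p z1 z2 /\ ~ y'' l <= qr p z1 z2) y') y) x).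
  - do 3 (apply dsys_cunion; intros).
    apply dsys_and; [apply dsys_le; auto|apply dsys_not, dsys_le; auto].
  - apply pred_ext; intro x; split.
    + intros [p [z1 [z2 [H1 H2]]]]. lra.
    + intros H. destruct (q_dense _ _ H) as [p [z1 [z2 Hq]]].
      exists p, z1, z2. lra.
Qed.

Lemma dsys_gt i c : (1 <= i <= N)%nat -> D (fun x => c < x i).
Proof.
  intros Hi. replace (fun x => c < x i) with (fun x => ~ x i <= c).
  - apply dsys_not, dsys_le; auto.
  - apply pred_ext; intro x; split; intros; lra.
Qed.

Lemma dsys_neq i l : (1 <= i <= N)%nat -> (1 <= l <= N)%nat -> D (fun x => x i <> x l).
Proof.
  intros Hi Hl.
  replace (fun x => x i <> x l) with (fun x => x i < x l \/ x l < x i).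
  - apply dsys_or; apply dsys_lt; auto.
  - apply pred_ext; intro x; split; [lra|]. intros H; destruct (Rtotal_order (x i) (x l)) as [?|[?|?]]; auto; tauto.
Qed.

Lemma dsys_eq i l : (1 <= i <= N)%nat -> (1 <= l <= N)%nat -> D (fun x => x i = x l).
Proof.
  intros Hi Hl. replace (fun x : nat -> R => x i = x l) with (fun x : nat -> R => ~ x i <> x l).
  - apply dsys_not, dsys_neq; auto.
  - apply pred_ext; intro x; split; [intros H; apply Classical_Prop.NNPP; auto|intros H H1; auto].
Qed.

Lemma dsys_imp (A : Prop) f : D f -> D (fun x => A -> f x).
Proof.
  intros H. destruct (Classical_Prop.classic A).
  - replace (fun x => A -> f x) with f by (apply pred_ext; intro; tauto). auto.
  - replace (fun x => A -> f x) with (fun _ : nat -> R => True) by (apply pred_ext; intro; tauto). apply dsys_True.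
Qed.

Lemma dsys_pand (A : Prop) f : D f -> D (fun x => A /\ f x).
Proof.
  intros H. destruct (Classical_Prop.classic A).
  - replace (fun x => A /\ f x) with f by (apply pred_ext; intro; tauto). auto.
  - replace (fun x => A /\ f x) with (fun _ : nat -> R => False) by (apply pred_ext; intro; tauto). apply dsys_False.
Qed.

Lemma dsys_pand' (A : Prop) f : (A -> D f) -> D (fun x => A /\ f x).
Proof.
  intros H. destruct (Classical_Prop.classic A).
  - replace (fun x => A /\ f x) with f by (apply pred_ext; intro; tauto). auto.
  - replace (fun x => A /\ f x) with (fun _ : nat -> R => False) by (apply pred_ext; intro; tauto). apply dsys_False.
Qed.

Lemma dsys_imp' (A : Prop) f : (A -> D f) -> D (fun x => A -> f x).
Proof.
  intros H. destruct (Classical_Prop.classic A).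
  - replace (fun x => A -> f x) with f by (apply pred_ext; intro; tauto). auto.
  - replace (fun x => A -> f x) with (fun _ : nat -> R => True) by (apply pred_ext; intro; tauto). apply dsys_True.
Qed.

Lemma dsys_all_range' (fs : nat -> (nat -> R) -> Prop) a b : (forall m, (a <= m <= b)%nat -> D (fs m)) ->
  D (fun x => forall m, (a <= m <= b)%nat -> fs m x).
Proof.
  intros H.
  replace (fun x => forall m, (a <= m <= b)%nat -> fs m x) with
    (fun x => forall m, (a <= m <= b)%nat -> (fun y => (a <= m <= b)%nat -> fs m y) x).
  - apply dsys_all_range. intros m. apply dsys_imp'. auto.
  - apply pred_ext; intro x; split; intros H1 m Hm; [apply H1; auto|intros; apply H1; auto].
Qed.

Lemma dsys_ex_range' (fs : nat -> (nat -> R) -> Prop) a b : (forall m, (a <= m <= b)%nat -> D (fs m)) ->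
  D (fun x => exists m, (a <= m <= b)%nat /\ fs m x).
Proof.
  intros H.
  replace (fun x => exists m, (a <= m <= b)%nat /\ fs m x) with
    (fun x => exists m, (a <= m <= b)%nat /\ (fun y => (a <= m <= b)%nat /\ fs m y) x).
  - apply dsys_ex_range. intros m. apply dsys_pand'. auto.
  - apply pred_ext; intro x; split; intros [m Hm]; exists m; tauto.
Qed.

End Dynkin.

Ltac dsys_tac := repeat (first [apply dsys_True | apply dsys_le | apply dsys_gt | apply dsys_lt | apply dsys_neq | apply dsys_eq | apply dsys_and | apply dsys_or | apply dsys_not]); try lia.


Definition sig (s t i : nat) : nat := if Nat.eqb i s then t else if Nat.eqb i t then s else i.
Definition swp (s t : nat) (x : nat -> R) : nat -> R := fun i => x (sig s t i).

Lemma sig_inv s t i : sig s t (sig s t i) = i.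
Proof.
  unfold sig. destruct (Nat.eqb_spec i s); destruct (Nat.eqb_spec i t); subst.
  - rewrite Nat.eqb_refl; auto.
  - destruct (Nat.eqb_spec t s); [lia|]. rewrite Nat.eqb_refl; auto.
  - rewrite Nat.eqb_refl; auto.
  - destruct (Nat.eqb_spec i s); [lia|]. destruct (Nat.eqb_spec i t); [lia|]. auto.
Qed.

Lemma sig_range s t i N : (1 <= s <= N)%nat -> (1 <= t <= N)%nat -> (1 <= i <= N)%nat -> (1 <= sig s t i <= N)%nat.
Proof.
  intros. unfold sig. destruct (Nat.eqb_spec i s); destruct (Nat.eqb_spec i t); lia.
Qed.

Lemma sig_other s t i : i <> s -> i <> t -> sig s t i = i.
Proof. intros. unfold sig. destruct (Nat.eqb_spec i s); destruct (Nat.eqb_spec i t); lia. Qed.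

Lemma sig_s s t : sig s t s = t.
Proof. unfold sig. rewrite Nat.eqb_refl; auto. Qed.

Lemma sig_t s t : sig s t t = s.
Proof. unfold sig. destruct (Nat.eqb_spec t s); subst; auto. rewrite Nat.eqb_refl; auto. Qed.

Lemma prod1n_ext f g n : (forall i, (1 <= i <= n)%nat -> f i = g i) -> prod1n f n = prod1n g n.
Proof.
  induction n; simpl; auto. intros H. rewrite IHn; [rewrite H; auto; lia|]. intros; apply H; lia.
Qed.

Lemma prod1n_upd g s v n : (1 <= s <= n)%nat ->
  prod1n (fun i => if Nat.eqb i s then v else g i) n * g s = prod1n g n * v.
Proof.
  induction n; intros Hs; [lia|]. cbn [prod1n].
  destruct (Nat.eq_dec s (S n)).
  - subst. rewrite Nat.eqb_refl.
    rewrite (prod1n_ext _ g n); [ring|]. intros i Hi. destruct (Nat.eqb_spec i (S n)); auto; lia.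
  - destruct (Nat.eqb_spec (S n) s); [lia|]. 
    replace (prod1n (fun i => if Nat.eqb i s then v else g i) n * g (S n) * g s)
      with (prod1n (fun i => if Nat.eqb i s then v else g i) n * g s * g (S n)) by ring.
    rewrite IHn; [ring|lia].
Qed.

Lemma prod1n_sig g s t n : (1 <= s <= n)%nat -> (1 <= t <= n)%nat ->
  prod1n (fun i => g (sig s t i)) n = prod1n g n.
Proof.
  destruct (Nat.eq_dec s t) as [->|Hst].
  { intros; apply prod1n_ext; intros i Hi; unfold sig; destruct (Nat.eqb_spec i t); subst; auto. }
  induction n; intros Hs Ht; [lia|]. cbn [prod1n].
  - destruct (Nat.eq_dec s (S n)); destruct (Nat.eq_dec t (S n)); try lia.
    + subst. rewrite sig_s.
      rewrite (prod1n_ext _ (fun i => if Nat.eqb i t then g (S n) else g i) n).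
      * rewrite prod1n_upd; [ring|lia].
      * intros i Hi. unfold sig. destruct (Nat.eqb_spec i (S n)); [lia|]. destruct (Nat.eqb i t); auto.
    + subst. rewrite sig_t.
      rewrite (prod1n_ext _ (fun i => if Nat.eqb i s then g (S n) else g i) n).
      * rewrite prod1n_upd; [ring|lia].
      * intros i Hi. unfold sig. destruct (Nat.eqb_spec i s); auto. destruct (Nat.eqb_spec i (S n)); [lia|]. auto.
    + rewrite sig_other by lia. rewrite IHn; auto; lia.
Qed.

Lemma rect_swp N c s t : (1 <= s <= N)%nat -> (1 <= t <= N)%nat ->
  (fun x => rect N c (swp s t x)) = rect N (swp s t c).
Proof.
  intros Hs Ht. apply pred_ext; intro x; unfold rect, swp; split.
  - intros H i Hi. specialize (H (sig s t i) (sig_range s t i N Hs Ht Hi)). rewrite sig_inv in H; auto.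
  - intros H i Hi. specialize (H (sig s t i) (sig_range s t i N Hs Ht Hi)). rewrite sig_inv in H; auto.
Qed.

Section Swap.
Context {Omega : Type} (Sp : ProbSpace Omega) (X : nat -> Omega -> R) (F : R -> R).
Hypothesis Hiid : iid_with_cdf Sp X F.
Notation P := (prob Sp).
Notation M := (meas Sp).

Definition ev (f : (nat -> R) -> Prop) : Omega -> Prop := fun w => f (fun i => X i w).

Lemma meas_all_range (A : nat -> Omega -> Prop) a b : (forall i, M (A i)) ->
  M (fun w => forall i, (a <= i <= b)%nat -> A i w).
Proof.
  intros H. induction b.
  - destruct a.
    + replace (fun w => forall i, (0 <= i <= 0)%nat -> A i w) with (A O); auto.
      apply ev_ext; intro w; split; [intros; replace i with O by lia; auto|intros H1; apply H1; lia].
    + replace (fun w => forall i, (S a <= i <= 0)%nat -> A i w) with (fun _ : Omega => True).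
      * apply meas_full.
      * apply ev_ext; intro w; split; auto; intros; lia.
  - replace (fun w => forall i, (a <= i <= S b)%nat -> A i w) with
      (fun w => (forall i, (a <= i <= b)%nat -> A i w) /\ ((a <= S b)%nat -> A (S b) w)).
    + apply meas_and; auto. destruct (Compare_dec.le_dec a (S b)).
      * replace (fun w => (a <= S b)%nat -> A (S b) w) with (A (S b)); auto. apply ev_ext; intro; tauto.
      * replace (fun w => (a <= S b)%nat -> A (S b) w) with (fun _ : Omega => True); [apply meas_full|].
        apply ev_ext; intro; tauto.
    + apply ev_ext; intro w; split.
      * intros [H1 H2] i Hi. destruct (Nat.eq_dec i (S b)); [subst; apply H2; lia|apply H1; lia].
      * intros H1; split; intros; apply H1; lia.
Qed.

Lemma meas_rect N c : M (ev (rect N c)).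
Proof.
  unfold ev, rect. apply meas_all_range. intros i. apply (proj1 Hiid).
Qed.

Lemma P_rect N c : P (ev (rect N c)) = prod1n (fun i => F (c i)) N.
Proof. apply (proj2 Hiid). Qed.

Lemma lam_meas : lamsys (fun f => M (ev f)).
Proof.
  split; [|split].
  - apply meas_full.
  - intros f Hf. apply meas_compl; auto.
  - intros fs Hfs _. apply meas_cunion; auto.
Qed.

Lemma dsys_meas N f : dsys N f -> M (ev f).
Proof. intros H. apply H; [apply lam_meas|apply meas_rect]. Qed.

Lemma swap_inv N s t f : (1 <= s <= N)%nat -> (1 <= t <= N)%nat -> dsys N f ->
  P (ev f) = P (ev (fun x => f (swp s t x))).
Proof.
  intros Hs Ht Hf.
  cut ((fun f => M (ev f) /\ M (ev (fun x => f (swp s t x))) /\ P (ev f) = P (ev (fun x => f (swp s t x)))) f).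
  { intros [_ [_ H]]; auto. }
  apply Hf.
  - split; [|split].
    + split; [apply meas_full|split; [apply meas_full|auto]].
    + intros g [H1 [H2 H3]]. split; [|split].
      * apply meas_compl; auto.
      * apply (meas_compl _ Sp _ H2).
      * unfold ev in *. rewrite (P_compl Sp _ H1), (P_compl Sp _ H2). rewrite H3; auto.
    + intros fs Hfs Hd. split; [|split].
      * apply meas_cunion; intros n; apply Hfs.
      * apply (meas_cunion _ Sp (fun n => ev (fun x => fs n (swp s t x)))). intros n; apply Hfs.
      * unfold ev. apply (uniqueness_sum (fun n => P (ev (fs n)))).
        -- apply prob_sigma_additive; [intros n; apply Hfs|]. intros n m w Hnm; apply Hd; auto.
        -- replace (fun n => P (ev (fs n))) with (fun n => P (ev (fun x => fs n (swp s t x)))).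
           ++ apply (prob_sigma_additive _ Sp (fun n => ev (fun x => fs n (swp s t x)))); [intros n; apply Hfs|].
              intros n m w Hnm; apply Hd; auto.
           ++ apply functional_extensionality; intro n; symmetry; apply Hfs.
  - intros c. split; [apply meas_rect|]. rewrite rect_swp; auto. split; [apply meas_rect|].
    rewrite !P_rect. unfold swp. symmetry. apply (prod1n_sig (fun i => F (c i))); auto.
Qed.

End Swap.

Section Ties.
Context {Omega : Type} (Sp : ProbSpace Omega) (X : nat -> Omega -> R) (F : R -> R).
Hypothesis Hiid : iid_with_cdf Sp X F.
Hypothesis HFc : continuity F.
Notation P := (prob Sp).
Notation M := (meas Sp).
Notation ev := (ev X).

Lemma P_diff (A B : Omega -> Prop) : M A -> M B -> (forall w, B w -> A w) ->
  P (fun w => A w /\ ~ B w) = P A - P B.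
Proof.
  intros HA HB H. rewrite (P_split Sp A B HA HB).
  replace (fun w => A w /\ B w) with B by (apply ev_ext; intro; split; auto; tauto). ring.
Qed.

Lemma P_sub_range (A : nat -> Omega -> Prop) a b c : (forall r, M (A r)) ->
  (forall r, (a <= r <= b)%nat -> P (A r) <= c) -> 0 <= c ->
  P (fun w => exists r, (a <= r <= b)%nat /\ A r w) <= INR (S b - a) * c.
Proof.
  intros HM Hc Hc0. induction b.
  - destruct a.
    + replace (fun w => exists r, (0 <= r <= 0)%nat /\ A r w) with (A O).
      * simpl. rewrite Rmult_1_l. apply Hc; lia.
      * apply ev_ext; intro w; split; [intros; exists O; split; auto; lia|intros [r [Hr H]]; replace r with O in H by lia; auto].
    + replace (fun w => exists r, (S a <= r <= 0)%nat /\ A r w) with (fun _ : Omega => False).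
      * rewrite P_empty. apply Rmult_le_pos; auto. apply pos_INR.
      * apply ev_ext; intro w; split; [tauto|intros [r [Hr _]]; lia].
  - assert (Hm : forall a b, M (fun w => exists r, (a <= r <= b)%nat /\ A r w)).
    { intros a' b'. apply meas_cunion. intros r. destruct (Compare_dec.le_dec a' r); destruct (Compare_dec.le_dec r b').
      - replace (fun w => (a' <= r <= b')%nat /\ A r w) with (A r); auto. apply ev_ext; intro; split; [intros; split; auto|tauto].
      - replace (fun w => (a' <= r <= b')%nat /\ A r w) with (fun _ : Omega => False); [apply meas_empty|apply ev_ext; intro; split; [tauto|intros [? ?]; lia]].
      - replace (fun w => (a' <= r <= b')%nat /\ A r w) with (fun _ : Omega => False); [apply meas_empty|apply ev_ext; intro; split; [tauto|intros [? ?]; lia]].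
      - replace (fun w => (a' <= r <= b')%nat /\ A r w) with (fun _ : Omega => False); [apply meas_empty|apply ev_ext; intro; split; [tauto|intros [? ?]; lia]]. }
    destruct (Compare_dec.le_dec a (S b)).
    + apply Rle_trans with (P (fun w => (exists r, (a <= r <= b)%nat /\ A r w) \/ A (S b) w)).
      * apply P_mono; auto. apply meas_or; auto.
        intros w [r [Hr H]]. destruct (Nat.eq_dec r (S b)); [subst; auto|left; exists r; split; auto; lia].
      * eapply Rle_trans; [apply P_sub2; auto|].
        assert (HIH : P (fun w => exists r, (a <= r <= b)%nat /\ A r w) <= INR (S b - a) * c)
          by (apply IHb; intros; apply Hc; lia).
        assert (P (A (S b)) <= c) by (apply Hc; lia).
        replace (S (S b) - a)%nat with (S (S b - a)) by lia. rewrite S_INR. lra.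
    + replace (fun w => exists r, (a <= r <= S b)%nat /\ A r w) with (fun _ : Omega => False).
      * rewrite P_empty. apply Rmult_le_pos; auto. apply pos_INR.
      * apply ev_ext; intro w; split; [tauto|intros [r [Hr _]]; lia].
Qed.

Lemma F_eq s : F s = P (ev (fun x => x 1%nat <= s)).
Proof.
  pose proof (P_rect Sp X F Hiid 1 (fun _ => s)) as H. simpl in H. rewrite Rmult_1_l in H.
  rewrite <- H. apply P_eq_ext. intros w. unfold Submission.ev, rect; split.
  - intros H1; apply H1; lia.
  - intros H1 i Hi. replace i with 1%nat by lia; auto.
Qed.

Lemma F2_eq s t : P (ev (fun x => x 1%nat <= s /\ x 2%nat <= t)) = F s * F t.
Proof.
  pose proof (P_rect Sp X F Hiid 2 (fun i => if Nat.eqb i 1 then s else t)) as H. simpl in H. rewrite Rmult_1_l in H.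
  rewrite <- H. apply P_eq_ext. intros w. unfold Submission.ev, rect; split.
  - intros [H1 H2] i Hi. destruct i as [|[|[|i]]]; simpl; auto; lia.
  - intros H1; split; [apply (H1 1%nat)|apply (H1 2%nat)]; lia.
Qed.

Lemma mX i c : M (ev (fun x => x i <= c)).
Proof. apply (proj1 Hiid). Qed.

Lemma F_mono s t : s <= t -> F s <= F t.
Proof. intros H. rewrite !F_eq. apply P_mono; try apply mX. unfold Submission.ev; intros; lra. Qed.

Lemma F_range s : 0 <= F s <= 1.
Proof. rewrite F_eq. split; [apply P_ge0|apply P_le1]; apply mX. Qed.

Lemma F_hi eps : 0 < eps -> exists y, F y > 1 - eps.
Proof.
  intros He.
  pose proof (cont_below Sp (fun m => ev (fun x => x 1%nat <= INR m)) (fun m => mX _ _)) as H. cbv beta in H.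
  replace (fun w => exists n, ev (fun x => x 1%nat <= INR n) w) with (fun _ : Omega => True) in H.
  - rewrite prob_full in H. destruct (H ltac:(intros n w; unfold Submission.ev; rewrite S_INR; lra) eps) as [N HN]; auto.
    exists (INR N). rewrite F_eq. specialize (HN N (le_n N)). unfold R_dist in HN.
      apply Rabs_def2 in HN. lra.
  - apply ev_ext; intro w; split; auto. intros _. destruct (bounded_nat (fun i => X i w) 1) as [m Hm].
    exists m. apply Hm; auto.
Qed.

Lemma F_lo eps : 0 < eps -> exists y, F y < eps.
Proof.
  intros He.
  pose proof (cont_below Sp (fun m => ev (fun x => ~ x 1%nat <= - INR m)) (fun m => meas_compl _ Sp _ (mX _ _))) as H. cbv beta in H.
  replace (fun w => exists n, ev (fun x => ~ x 1%nat <= - INR n) w) with (fun _ : Omega => True) in H.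
  - rewrite prob_full in H. destruct (H ltac:(intros n w; unfold Submission.ev; rewrite S_INR; lra) eps) as [N HN]; auto.
    exists (- INR N). rewrite F_eq. specialize (HN N (le_n N)). unfold R_dist in HN.
      apply Rabs_def2 in HN. unfold Submission.ev in HN. rewrite P_compl in HN; [|apply mX]. unfold Submission.ev. lra.
  - apply ev_ext; intro w; split; auto. intros _. destruct (bounded_nat (fun i => - X i w) 1) as [m Hm].
    exists (S m). unfold Submission.ev. rewrite S_INR. specialize (Hm 1%nat (le_n _)). simpl in Hm. lra.
Qed.

Lemma cell_prob s t : s <= t ->
  P (ev (fun x => (s < x 1%nat <= t) /\ (s < x 2%nat <= t))) = (F t - F s) * (F t - F s).
Proof.
  intros Hst.
  assert (HR : forall a b, M (ev (fun x => x 1%nat <= a /\ x 2%nat <= b)))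
    by (intros; apply meas_and; apply mX).
  assert (E1 : P (ev (fun x => (x 1%nat <= t /\ x 2%nat <= t) /\ ~ (x 1%nat <= s /\ x 2%nat <= t))) = F t * F t - F s * F t).
  { rewrite <- !F2_eq. rewrite <- (P_diff _ _ (HR t t) (HR s t)).
    - apply P_eq_ext; intro w; unfold Submission.ev; tauto.
    - intros w; unfold Submission.ev; lra. }
  assert (E2 : P (ev (fun x => (x 1%nat <= t /\ x 2%nat <= s) /\ ~ (x 1%nat <= s /\ x 2%nat <= s))) = F t * F s - F s * F s).
  { rewrite <- !F2_eq. rewrite <- (P_diff _ _ (HR t s) (HR s s)).
    - apply P_eq_ext; intro w; unfold Submission.ev; tauto.
    - intros w; unfold Submission.ev; lra. }
  assert (M1 : M (ev (fun x => (x 1%nat <= t /\ x 2%nat <= t) /\ ~ (x 1%nat <= s /\ x 2%nat <= t))))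
    by (apply (dsys_meas Sp X F Hiid 2); repeat (first [apply dsys_and | apply dsys_not | apply dsys_le]); lia).
  assert (M2 : M (ev (fun x => (x 1%nat <= t /\ x 2%nat <= s) /\ ~ (x 1%nat <= s /\ x 2%nat <= s))))
    by (apply (dsys_meas Sp X F Hiid 2); repeat (first [apply dsys_and | apply dsys_not | apply dsys_le]); lia).
  replace ((F t - F s) * (F t - F s)) with (F t * F t - F s * F t - (F t * F s - F s * F s)) by ring.
  rewrite <- E1, <- E2, <- (P_diff _ _ M1 M2).
  - apply P_eq_ext. intros w. unfold Submission.ev.
    destruct (Rle_dec (X 1%nat w) s); destruct (Rle_dec (X 2%nat w) s); destruct (Rle_dec (X 1%nat w) t); destruct (Rle_dec (X 2%nat w) t);
    split; intros; intuition lra.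
  - intros w; unfold Submission.ev; lra.
Qed.

Lemma cover (t : nat -> R) n z : (1 <= n)%nat ->
  z <= t 1%nat \/ t n < z \/ exists r, (2 <= r <= n)%nat /\ t (pred r) < z <= t r.
Proof.
  intros Hn. induction Hn.
  - destruct (Rle_dec z (t 1%nat)); [left; auto|right; left; lra].
  - destruct IHHn as [H|[H|[r [Hr H]]]]; auto.
    + destruct (Rle_dec z (t (S m))).
      * right; right. exists (S m). split; [lia|]. simpl; lra.
      * right; left; lra.
    + right; right. exists r; split; auto; lia.
Qed.

Lemma tie12_bound (m : nat) : (2 <= m)%nat -> P (ev (fun x => x 1%nat = x 2%nat)) <= 2 / INR m.
Proof.
  intros Hm.
  assert (HmR : 2 <= INR m) by (replace 2 with (INR 2) by (simpl; ring); apply le_INR; auto).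
  assert (Hm0 : 0 < INR m) by lra.
  destruct (F_lo (1 / INR m)) as [xl Hxl]; [apply Rdiv_lt_0_compat; lra|].
  destruct (F_hi (1 / INR m)) as [xh Hxh]; [apply Rdiv_lt_0_compat; lra|].
  assert (H1m : 1 / INR m <= 1 - 1 / INR m).
  { apply Rmult_le_reg_r with (INR m); auto. unfold Rdiv. rewrite Rmult_minus_distr_r, Rmult_assoc, Rinv_l; lra. }
  assert (Hlh : xl < xh).
  { destruct (Rlt_dec xl xh); auto. pose proof (F_mono xh xl). lra. }
  assert (Hex : forall r : nat, exists z, (1 <= r <= m - 1)%nat -> F z = INR r / INR m).
  { intros r. destruct (Compare_dec.le_dec 1 r); destruct (Compare_dec.le_dec r (m-1)); try (exists 0; intros; lia).
    assert (Hr1 : 1 / INR m <= INR r / INR m).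
    { unfold Rdiv; apply Rmult_le_compat_r; [left; apply Rinv_0_lt_compat; auto|]. replace 1 with (INR 1) by auto. apply le_INR; auto. }
    assert (Hr2 : INR r / INR m <= 1 - 1 / INR m).
    { apply Rmult_le_reg_r with (INR m); auto. unfold Rdiv. rewrite Rmult_minus_distr_r, !Rmult_assoc, Rinv_l; [|lra].
      assert (INR r <= INR (m - 1)) by (apply le_INR; auto). rewrite minus_INR in H; [|lia]. simpl in H. lra. }
    destruct (IVT (fun z => F z - INR r / INR m) xl xh) as [z [_ Hz]]; auto.
    - apply continuity_minus; auto. apply continuity_const. intros ? ?; auto.
    - simpl; lra.
    - simpl; lra.
    - exists z; intros; lra. }
  pose (t := fun r => proj1_sig (constructive_indefinite_description _ (Hex r))).
  assert (Ht : forall r, (1 <= r <= m - 1)%nat -> F (t r) = INR r / INR m).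
  { intros r Hr. unfold t. destruct (constructive_indefinite_description _ (Hex r)); simpl; auto. }
  assert (HMc : forall r, M (ev (fun x => (t (pred r) < x 1%nat <= t r) /\ (t (pred r) < x 2%nat <= t r)))).
  { intros r. apply (dsys_meas Sp X F Hiid 2). dsys_tac. }
  assert (Hcell : forall r, (2 <= r <= m - 1)%nat ->
     P (ev (fun x => (t (pred r) < x 1%nat <= t r) /\ (t (pred r) < x 2%nat <= t r))) <= 1 / INR m * (1 / INR m)).
  { intros r Hr. rewrite cell_prob.
    - rewrite !Ht; try lia. replace (INR r) with (INR (pred r) + 1) by (destruct r; [lia|]; simpl pred; rewrite S_INR; auto). right; field; lra.
    - assert (F (t (pred r)) < F (t r)).
      { rewrite !Ht; try lia. unfold Rdiv; apply Rmult_lt_compat_r; [apply Rinv_0_lt_compat; lra|]. apply lt_INR; lia. }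
      destruct (Rle_dec (t (pred r)) (t r)); auto. pose proof (F_mono (t r) (t (pred r))). lra. }
  assert (MA0 : M (ev (fun x => x 1%nat <= t 1%nat /\ x 2%nat <= t 1%nat))) by (apply (dsys_meas Sp X F Hiid 2); dsys_tac).
  assert (MB : M (ev (fun x => ~ x 1%nat <= t (m - 1)%nat))) by (apply (dsys_meas Sp X F Hiid 2); dsys_tac).
  assert (MC : M (fun w => exists r, (2 <= r <= m - 1)%nat /\ ev (fun x => (t (pred r) < x 1%nat <= t r) /\ (t (pred r) < x 2%nat <= t r)) w)).
  { apply meas_cunion. intros r.
    apply (dsys_meas Sp X F Hiid 2 (fun x => (2 <= r <= m - 1)%nat /\ ((t (pred r) < x 1%nat <= t r) /\ (t (pred r) < x 2%nat <= t r)))).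
    apply dsys_pand. dsys_tac. }
  eapply Rle_trans.
  { apply (P_mono Sp _ (fun w => (ev (fun x => x 1%nat <= t 1%nat /\ x 2%nat <= t 1%nat) w \/
            (exists r, (2 <= r <= m - 1)%nat /\ ev (fun x => (t (pred r) < x 1%nat <= t r) /\ (t (pred r) < x 2%nat <= t r)) w))
            \/ ev (fun x => ~ x 1%nat <= t (m - 1)%nat) w)).
    - apply (dsys_meas Sp X F Hiid 2). dsys_tac.
    - repeat apply meas_or; auto.
    - intros w Hw. unfold Submission.ev in *. destruct (cover t (m - 1) (X 1%nat w)) as [H|[H|[r [Hr H]]]]; try lia.
      + left; left. rewrite <- Hw. lra.
      + right. lra.
      + left; right. exists r. split; auto. rewrite <- Hw; lra. }
  eapply Rle_trans; [apply P_sub2; auto; apply meas_or; auto|].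
  eapply Rle_trans; [apply Rplus_le_compat_r; apply P_sub2; auto|].
  assert (H0 : P (ev (fun x => x 1%nat <= t 1%nat /\ x 2%nat <= t 1%nat)) = 1 / INR m * (1 / INR m)).
  { rewrite F2_eq, Ht; [|lia]. simpl INR. auto. }
  assert (H2 : P (ev (fun x => ~ x 1%nat <= t (m - 1)%nat)) = 1 / INR m).
  { transitivity (P (fun w => ~ ev (fun x => x 1%nat <= t (m - 1)%nat) w)); [apply P_eq_ext; unfold Submission.ev; tauto|].
    rewrite P_compl; [|apply mX]. rewrite <- F_eq, Ht; [|lia].
    rewrite minus_INR by lia. simpl INR. field. lra. }
  pose proof (P_sub_range 
     (fun r => ev (fun x => (t (pred r) < x 1%nat <= t r) /\ (t (pred r) < x 2%nat <= t r))) 2 (m - 1) (1 / INR m * (1 / INR m)) HMc Hcell) as H1.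
  rewrite H0, H2.
  assert (Hpos : 0 <= 1 / INR m * (1 / INR m)).
  { apply Rmult_le_pos; left; apply Rdiv_lt_0_compat; lra. }
  specialize (H1 Hpos).
  replace (S (m - 1) - 2)%nat with (m - 2)%nat in H1 by lia.
  rewrite minus_INR in H1 by lia. simpl INR in H1.
  cut (1 / INR m * (1 / INR m) + (INR m - 2) * (1 / INR m * (1 / INR m)) + 1 / INR m <= 2 / INR m); [lra|].
  apply Rmult_le_reg_r with (INR m * INR m); [nra|].
  field_simplify; [|lra|lra]. nra.
Qed.



Lemma tie12 : P (ev (fun x => x 1%nat = x 2%nat)) = 0.
Proof.
  assert (Hm : M (ev (fun x => x 1%nat = x 2%nat))) by (apply (dsys_meas Sp X F Hiid 2); dsys_tac).
  pose proof (P_ge0 Sp _ Hm).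
  destruct (Rle_lt_or_eq_dec _ _ H) as [Hp|]; auto.
  exfalso. set (p := P (ev (fun x => x 1%nat = x 2%nat))) in *.
  destruct (archimed (2 / p)) as [H1 _].
  set (m := (Z.to_nat (up (2 / p)) + 2)%nat).
  assert (Hmr : 2 / p < INR m).
  { unfold m. rewrite plus_INR, INR_IZR_INZ, ZifyInst.of_nat_to_nat_eq.
    assert (0 < 2 / p) by (apply Rdiv_lt_0_compat; lra).
    assert (IZR (up (2/p)) <= IZR (Z.max 0 (up (2/p)))) by (apply IZR_le; lia). simpl. lra. }
  pose proof (tie12_bound m ltac:(unfold m; lia)).
  assert (0 < INR m) by (apply lt_0_INR; unfold m; lia).
  assert (2 < p * INR m).
  { apply Rmult_lt_reg_l with (/ p). apply Rinv_0_lt_compat; auto.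
    rewrite <- Rmult_assoc, Rinv_l, Rmult_1_l; [|lra]. unfold Rdiv in Hmr. lra. }
  assert (p <= 2 / INR m) by auto.
  apply Rmult_le_compat_r with (r := INR m) in H4; [|lra].
  unfold Rdiv in H4. rewrite Rmult_assoc, Rinv_l in H4; lra.
Qed.

Lemma tie_pair1 N a b : (1 <= a <= N)%nat -> (2 <= b <= N)%nat -> a <> b ->
  P (ev (fun x => x a = x b)) = 0.
Proof.
  intros Ha Hb Hab.
  rewrite (swap_inv Sp X F Hiid N 1 a); [|lia|lia|dsys_tac].
  transitivity (P (ev (fun x => x 1%nat = x b))).
  { apply P_eq_ext; intro w. unfold Submission.ev, swp. rewrite sig_t, (sig_other 1 a b) by lia. tauto. }
  rewrite (swap_inv Sp X F Hiid N 2 b); [|lia|lia|dsys_tac].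
  rewrite <- tie12.
  apply P_eq_ext; intro w. unfold Submission.ev, swp. rewrite sig_t, (sig_other 2 b 1) by lia. tauto.
Qed.

Lemma tie_pair N a b : (1 <= a <= N)%nat -> (1 <= b <= N)%nat -> a <> b ->
  P (ev (fun x => x a = x b)) = 0.
Proof.
  intros Ha Hb Hab. destruct (Nat.eq_dec b 1).
  - subst. rewrite <- (tie_pair1 N 1 a); try lia. apply P_eq_ext; intro w; unfold Submission.ev; split; auto.
  - apply (tie_pair1 N); lia.
Qed.

Definition NT (N : nat) (x : nat -> R) : Prop :=
  forall a b, (1 <= a <= N)%nat -> (1 <= b <= N)%nat -> a <> b -> x a <> x b.

Lemma dsys_NT N : dsys N (NT N).
Proof.
  replace (NT N) with (fun x : nat -> R => forall a, (1 <= a <= N)%nat -> (fun y : nat -> R => forall b, (1 <= b <= N)%nat ->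
       (fun z : nat -> R => ((1 <= a <= N)%nat /\ (1 <= b <= N)%nat /\ a <> b) -> z a <> z b) y) x).
  - apply dsys_all_range. intros a. apply dsys_all_range. intros b. apply dsys_imp'. intros H. dsys_tac.
  - apply pred_ext; intro x; unfold NT; split; intros H a b Ha Hb; [intros Hab; apply H; auto|intros; apply H; tauto].
Qed.

Lemma P_notNT N : P (ev (fun x => ~ NT N x)) = 0.
Proof.
  pose (B := fun a b => ev (fun x => ((1 <= a <= N)%nat /\ (1 <= b <= N)%nat /\ a <> b) /\ x a = x b)).
  assert (HB : forall a b, M (B a b)).
  { intros a b. apply (dsys_meas Sp X F Hiid N). apply dsys_pand'. intros H. dsys_tac. }
  pose (A := fun a w => exists b, (1 <= b <= N)%nat /\ B a b w).
  assert (HA : forall a, M (A a)).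
  { intros a. unfold A, B. apply (dsys_meas Sp X F Hiid N (fun x => exists b, (1 <= b <= N)%nat /\ (((1 <= a <= N)%nat /\ (1 <= b <= N)%nat /\ a <> b) /\ x a = x b))).
    apply dsys_ex_range. intros b. apply dsys_pand'. intros H. dsys_tac. }
  assert (HA0 : forall a, (1 <= a <= N)%nat -> P (A a) <= 0).
  { intros a Ha. eapply Rle_trans; [apply (P_sub_range (B a) 1 N 0); auto; [|lra]|rewrite Rmult_0_r; lra].
    intros b Hb. destruct (Nat.eq_dec a b).
    - replace (B a b) with (fun _ : Omega => False) by (apply ev_ext; intro w; unfold B, Submission.ev; tauto). rewrite P_empty; lra.
    - rewrite <- (tie_pair N a b); auto. apply P_mono; auto. apply (dsys_meas Sp X F Hiid N); dsys_tac.
      intros w; unfold B, Submission.ev; tauto. }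
  assert (Hle : P (ev (fun x => ~ NT N x)) <= 0).
  { eapply Rle_trans; [|eapply Rle_trans; [apply (P_sub_range A 1 N 0); auto; lra|rewrite Rmult_0_r; lra]].
    apply P_mono; auto.
    - apply (dsys_meas Sp X F Hiid N). apply dsys_not, dsys_NT.
    - apply meas_cunion. intros a. apply (dsys_meas Sp X F Hiid N (fun x => (1 <= a <= N)%nat /\ exists b, (1 <= b <= N)%nat /\ (((1 <= a <= N)%nat /\ (1 <= b <= N)%nat /\ a <> b) /\ x a = x b))).
      apply dsys_pand'. intros _. apply dsys_ex_range. intros b. apply dsys_pand'. intros H. dsys_tac.
    - intros w Hw. unfold Submission.ev in Hw. unfold NT in Hw.
      apply Classical_Pred_Type.not_all_ex_not in Hw. destruct Hw as [a Hw].
      apply Classical_Pred_Type.not_all_ex_not in Hw. destruct Hw as [b Hw].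
      exists a. unfold A, B, Submission.ev.
      destruct (Classical_Prop.classic ((1 <= a <= N)%nat)); [|tauto].
      destruct (Classical_Prop.classic ((1 <= b <= N)%nat)); [|tauto].
      destruct (Classical_Prop.classic (a <> b)); [|tauto].
      split; auto. exists b. split; auto. split; auto. apply Classical_Prop.NNPP. tauto. }
  pose proof (P_ge0 Sp (ev (fun x => ~ NT N x)) (dsys_meas Sp X F Hiid N _ (dsys_not N _ (dsys_NT N)))). lra.
Qed.

Lemma P_NT N f : dsys N f -> P (ev f) = P (ev (fun x => f x /\ NT N x)).
Proof.
  intros Hf. apply (P_null_and Sp (ev f) (ev (NT N))).
  - apply (dsys_meas Sp X F Hiid N); auto.
  - apply (dsys_meas Sp X F Hiid N); apply dsys_NT.
  - apply P_notNT.
Qed.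

End Ties.

Definition top (x : nat -> R) a b i : Prop := forall l, (a <= l <= b)%nat -> l <> i -> x l < x i.
Definition bnd (o : option R) (r : R) : Prop := match o with Some u => r <= u | None => True end.
Definition allb (o : option R) a b (x : nat -> R) : Prop := forall i, (a <= i <= b)%nat -> bnd o (x i).

Lemma bnd_mono o r r' : bnd o r -> r' <= r -> bnd o r'.
Proof. destruct o; simpl; auto; lra. Qed.

Lemma sig_range' s t i a b : (a <= s <= b)%nat -> (a <= t <= b)%nat -> (a <= i <= b)%nat -> (a <= sig s t i <= b)%nat.
Proof. intros. unfold sig. destruct (Nat.eqb_spec i s); destruct (Nat.eqb_spec i t); lia. Qed.

Lemma sig_range_out s t i a b : ~ (a <= s <= b)%nat -> ~ (a <= t <= b)%nat -> (a <= i <= b)%nat -> sig s t i = i.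
Proof. intros. apply sig_other; lia. Qed.

Lemma sig_eq_iff s t i l : sig s t l = i <-> l = sig s t i.
Proof. split; intros H; subst; rewrite sig_inv; auto. Qed.

Lemma top_swp x a b s t : (a <= s <= b)%nat -> (a <= t <= b)%nat ->
  top (swp s t x) a b t <-> top x a b s.
Proof.
  intros Hs Ht. unfold top, swp. rewrite sig_t. split.
  - intros H l Hl Hls. specialize (H (sig s t l) (sig_range' _ _ _ _ _ Hs Ht Hl)).
    rewrite sig_inv in H. apply H. intros E. apply sig_eq_iff in E. rewrite sig_t in E. auto.
  - intros H l Hl Hlt. apply H; [apply sig_range'; auto|]. intros E. apply sig_eq_iff in E. rewrite sig_s in E. auto.
Qed.

Lemma top_swp_fix x a b s t i : ((a <= s <= b)%nat <-> (a <= t <= b)%nat) -> i <> s -> i <> t ->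
  top (swp s t x) a b i <-> top x a b i.
Proof.
  intros Hst His Hit. unfold top, swp. rewrite (sig_other s t i) by auto.
  assert (Hr : forall l, (a <= l <= b)%nat -> (a <= sig s t l <= b)%nat).
  { intros l Hl. destruct (Compare_dec.le_dec a s); destruct (Compare_dec.le_dec s b).
    - apply sig_range'; auto; apply Hst; lia.
    - rewrite sig_other; auto; intros ->; [lia|]. assert (~ (a <= t <= b)%nat) by (intros H; apply Hst in H; lia). lia.
    - rewrite sig_other; auto; intros ->; [lia|]. assert (~ (a <= t <= b)%nat) by (intros H; apply Hst in H; lia). lia.
    - rewrite sig_other; auto; intros ->; [lia|]. assert (~ (a <= t <= b)%nat) by (intros H; apply Hst in H; lia). lia. }
  split.
  - intros H l Hl Hli. specialize (H (sig s t l) (Hr l Hl)). rewrite sig_inv in H. apply H.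
    intros E. apply sig_eq_iff in E. rewrite sig_other in E; auto.
  - intros H l Hl Hli. apply H; auto. intros E. apply sig_eq_iff in E. rewrite sig_other in E; auto.
Qed.

Lemma allb_swp_out o x a b s t : ~ (a <= s <= b)%nat -> ~ (a <= t <= b)%nat ->
  allb o a b (swp s t x) <-> allb o a b x.
Proof.
  intros Hs Ht. unfold allb, swp. split; intros H i Hi; specialize (H i Hi); rewrite sig_other in *; auto; lia.
Qed.

Lemma argmax (x : nat -> R) a b : (a <= b)%nat -> exists i, (a <= i <= b)%nat /\ forall l, (a <= l <= b)%nat -> x l <= x i.
Proof.
  intros Hab. induction Hab.
  - exists a. split; [lia|]. intros l Hl. replace l with a by lia. lra.
  - destruct IHHab as [i [Hi H]]. destruct (Rle_dec (x (S m)) (x i)).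
    + exists i. split; [lia|]. intros l Hl. destruct (Nat.eq_dec l (S m)); [subst; auto|apply H; lia].
    + exists (S m). split; [lia|]. intros l Hl. destruct (Nat.eq_dec l (S m)); [subst; lra|]. specialize (H l ltac:(lia)). lra.
Qed.

Lemma sum_range_const a b p : (a <= S b)%nat ->
  sum_f_R0 (fun n => if Compare_dec.le_dec a n then if Compare_dec.le_dec n b then p else 0 else 0) b = INR (S b - a) * p.
Proof.
  intros Hab. induction b.
  - simpl. destruct (Compare_dec.le_dec a 0); destruct (Compare_dec.le_dec 0 0); try lia.
    + replace a with O by lia. simpl; ring.
    + replace a with 1%nat by lia. simpl; ring.
  - simpl sum_f_R0. destruct (Nat.eq_dec a (S (S b))).
    + subst. rewrite Nat.sub_diag. simpl INR.
      assert (forall n, (n <= b)%nat -> sum_f_R0 (fun n0 => if Compare_dec.le_dec (S (S b)) n0 then if Compare_dec.le_dec n0 (S b) then p else 0 else 0) n = 0).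
      { induction n; intros Hn; simpl.
        - destruct (Compare_dec.le_dec (S (S b)) 0); [lia|auto].
        - destruct (Compare_dec.le_dec (S (S b)) (S n)); [lia|]. rewrite IHn; [ring|lia]. }
      rewrite H; [|lia]. destruct (Compare_dec.le_dec (S (S b)) (S b)); [lia|]. ring.
    + assert (E : sum_f_R0 (fun n => if Compare_dec.le_dec a n then if Compare_dec.le_dec n (S b) then p else 0 else 0) b =
                  sum_f_R0 (fun n => if Compare_dec.le_dec a n then if Compare_dec.le_dec n b then p else 0 else 0) b).
      { apply sum_eq. intros i Hi. destruct (Compare_dec.le_dec a i); auto. destruct (Compare_dec.le_dec i (S b)); destruct (Compare_dec.le_dec i b); auto; lia. }
      rewrite E, IHb; [|lia]. destruct (Compare_dec.le_dec a (S b)); [|lia]. destruct (Compare_dec.le_dec (S b) (S b)); [|lia].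
      replace (S (S b) - a)%nat with (S (S b - a)) by lia. rewrite S_INR. ring.
Qed.

Section Core.
Context {Omega : Type} (Sp : ProbSpace Omega) (X : nat -> Omega -> R) (F : R -> R).
Hypothesis Hiid : iid_with_cdf Sp X F.
Hypothesis HFc : continuity F.
Notation P := (prob Sp).
Notation M := (meas Sp).
Notation ev := (ev X).

Lemma dsys_top N a b i : (1 <= a)%nat -> (b <= N)%nat -> (1 <= i <= N)%nat -> dsys N (fun x => top x a b i).
Proof.
  intros. unfold top. apply dsys_all_range'. intros m Hm. apply dsys_imp'. intros _. dsys_tac.
Qed.

Lemma dsys_bnd N o i : (1 <= i <= N)%nat -> dsys N (fun x => bnd o (x i)).
Proof. intros Hi. destruct o; simpl; dsys_tac. Qed.

Lemma dsys_allb N o a b : (1 <= a)%nat -> (b <= N)%nat -> dsys N (allb o a b).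
Proof. intros. unfold allb. apply dsys_all_range'. intros m Hm. apply dsys_bnd; lia. Qed.

Ltac dsys_tac2 := repeat (first [apply dsys_True | apply dsys_top | apply dsys_bnd | apply dsys_allb | apply dsys_and | apply dsys_or | apply dsys_not]); try lia.

Lemma sym_sum N (psi : nat -> (nat -> R) -> Prop) a b i0 : (a <= b)%nat ->
  (forall i, (a <= i <= b)%nat -> dsys N (psi i)) ->
  (forall i, (a <= i <= b)%nat -> P (ev (psi i)) = P (ev (psi i0))) ->
  (forall i i' x, (a <= i <= b)%nat -> (a <= i' <= b)%nat -> i <> i' -> psi i x -> psi i' x -> False) ->
  P (ev (fun x => exists i, (a <= i <= b)%nat /\ psi i x)) = INR (S b - a) * P (ev (psi i0)).
Proof.
  intros Hab Hd Heq Hdis.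
  pose (A := fun n => if Compare_dec.le_dec a n then if Compare_dec.le_dec n b then ev (psi n) else (fun _ => False) else (fun _ => False)).
  transitivity (P (fun w => exists n, A n w)).
  { apply P_eq_ext; intro w; unfold A, Submission.ev; split.
    - intros [i [Hi H]]. exists i. destruct (Compare_dec.le_dec a i); [|lia]. destruct (Compare_dec.le_dec i b); [|lia]. auto.
    - intros [i H]. exists i. destruct (Compare_dec.le_dec a i); [|tauto]. destruct (Compare_dec.le_dec i b); [|tauto]. split; auto. }
  rewrite (P_fin_union Sp A b).
  - rewrite <- sum_range_const; [|lia]. apply sum_eq. intros i Hi. unfold A.
    destruct (Compare_dec.le_dec a i); [|apply P_empty]. destruct (Compare_dec.le_dec i b); [|apply P_empty]. apply Heq; lia.
  - intros n. unfold A. destruct (Compare_dec.le_dec a n); [|apply meas_empty]. destruct (Compare_dec.le_dec n b); [|apply meas_empty].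
    apply (dsys_meas Sp X F Hiid N). apply Hd; lia.
  - intros n n' w Hnn. unfold A.
    destruct (Compare_dec.le_dec a n); [|tauto]. destruct (Compare_dec.le_dec n b); [|tauto].
    destruct (Compare_dec.le_dec a n'); [|tauto]. destruct (Compare_dec.le_dec n' b); [|tauto].
    apply Hdis; auto; lia.
  - intros n w Hn. unfold A. destruct (Compare_dec.le_dec a n); [|tauto]. destruct (Compare_dec.le_dec n b); [lia|tauto].
Qed.

Lemma swap_eq N (f g : (nat -> R) -> Prop) s t : (1 <= s <= N)%nat -> (1 <= t <= N)%nat -> dsys N f ->
  (forall x, g x <-> f (swp s t x)) -> P (ev g) = P (ev f).
Proof.
  intros Hs Ht Hf H. rewrite (swap_inv Sp X F Hiid N s t f); auto. apply P_eq_ext. intros w. unfold Submission.ev. apply H.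
Qed.

End Core.

Section Core2.
Context {Omega : Type} (Sp : ProbSpace Omega) (X : nat -> Omega -> R) (F : R -> R).
Hypothesis Hiid : iid_with_cdf Sp X F.
Hypothesis HFc : continuity F.
Notation P := (prob Sp).
Notation M := (meas Sp).
Notation ev := (ev X).
Variables (j k : nat) (ou ov : option R).
Hypothesis Hj : (1 <= j)%nat.
Hypothesis Hjk : (j < k)%nat.
Hypothesis Hmono : forall r, bnd ou r -> bnd ov r.

Ltac dsys_tac3 := repeat (first [apply dsys_True | apply dsys_top | apply dsys_bnd | apply dsys_allb | apply dsys_and | apply dsys_or | apply dsys_not]); try lia.

Definition Tev x := top x 1 j j /\ top x 1 k k /\ bnd ou (x j) /\ bnd ov (x k).
Definition Dev x := top x 1 k k /\ allb ou 1 j x /\ bnd ov (x k).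
Definition psi1 i x := top x 1 j i /\ top x 1 k k /\ bnd ou (x i) /\ bnd ov (x k).
Definition psi2 i x := top x 1 k i /\ allb ou 1 j x /\ bnd ov (x i).
Definition Eev i x := top x 1 k i /\ bnd ou (x i).
Definition Qev x := allb ou 1 j x /\ allb ov (S j) k x.

Lemma NT_lt x a b : NT k x -> (1 <= a <= k)%nat -> (1 <= b <= k)%nat -> a <> b -> x a <= x b -> x a < x b.
Proof. intros H Ha Hb Hab Hle. destruct Hle; auto. exfalso; apply (H a b); auto. Qed.

Lemma step1 : P (ev Dev) = INR j * P (ev Tev).
Proof.
  rewrite (P_NT Sp X F Hiid HFc k); [|unfold Dev; dsys_tac3].
  transitivity (P (ev (fun x => (exists i, (1 <= i <= j)%nat /\ psi1 i x) /\ NT k x))).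
  { apply P_eq_ext; intro w; unfold Submission.ev. set (x := fun i => X i w). split.
    - intros [[H1 [H2 H3]] H4]. split; auto. destruct (argmax x 1 j Hj) as [i [Hi Hmax]].
      exists i. split; auto. unfold psi1. split; [|split; [auto|split; auto]].
      intros l Hl Hli. apply NT_lt; auto; lia.
    - intros [[i [Hi [H1 [H2 [H3 H4]]]]] HN]. split; auto. unfold Dev. split; [auto|split; auto].
      intros l Hl. destruct (Nat.eq_dec l i); [subst; auto|]. apply (bnd_mono _ _ _ H3). left; apply H1; auto. }
  rewrite <- (P_NT Sp X F Hiid HFc k); [|apply dsys_ex_range'; intros; unfold psi1; dsys_tac3].
  rewrite (sym_sum Sp X F Hiid k psi1 1 j j); auto.
  - replace (S j - 1)%nat with j by lia. auto.
  - intros; unfold psi1; dsys_tac3.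
  - intros i Hi. apply (swap_eq Sp X F Hiid k _ _ i j); try lia; [unfold psi1; dsys_tac3|].
    intros x. unfold psi1. rewrite (top_swp x 1 j i j) by lia. rewrite (top_swp_fix x 1 k i j k) by lia.
    replace (swp i j x j) with (x i) by (unfold swp; rewrite sig_t; auto). replace (swp i j x k) with (x k) by (unfold swp; rewrite sig_other; auto; lia). tauto.
  - intros i i' x Hi Hi' Hii [H1 _] [H2 _]. specialize (H1 i' Hi' (not_eq_sym Hii)). specialize (H2 i Hi Hii). lra.
Qed.


Lemma step_E : forall i, (1 <= i <= k)%nat -> P (ev (Eev i)) = P (ev (Eev 1)).
Proof.
  intros i Hi. apply (swap_eq Sp X F Hiid k _ _ i 1); try lia; [unfold Eev; dsys_tac3|].
  intros x. unfold Eev. rewrite (top_swp x 1 k i 1) by lia.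
  replace (swp i 1 x 1) with (x i) by (unfold swp; rewrite sig_t; auto). tauto.
Qed.

Lemma Edisj : forall i i' x, (1 <= i <= k)%nat -> (1 <= i' <= k)%nat -> i <> i' -> Eev i x -> Eev i' x -> False.
Proof. intros i i' x Hi Hi' Hii [H1 _] [H2 _]. specialize (H1 i' Hi' (not_eq_sym Hii)). specialize (H2 i Hi Hii). lra. Qed.

Lemma step_Ej : P (ev (fun x => exists i, (1 <= i <= j)%nat /\ Eev i x)) = INR j * P (ev (Eev 1)).
Proof.
  rewrite (sym_sum Sp X F Hiid k Eev 1 j 1); auto.
  - replace (S j - 1)%nat with j by lia. auto.
  - intros; unfold Eev; dsys_tac3.
  - intros; apply step_E; lia.
  - intros; apply (Edisj i i' x); auto; lia.
Qed.

Lemma step_Ek : P (ev (allb ou 1 k)) = INR k * P (ev (Eev 1)).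
Proof.
  rewrite (P_NT Sp X F Hiid HFc k); [|dsys_tac3].
  transitivity (P (ev (fun x => (exists i, (1 <= i <= k)%nat /\ Eev i x) /\ NT k x))).
  { apply P_eq_ext; intro w; unfold Submission.ev. set (x := fun i => X i w). split.
    - intros [H1 H4]. split; auto. destruct (argmax x 1 k ltac:(lia)) as [i [Hi Hmax]].
      exists i. split; auto. unfold Eev. split; [|apply H1; auto].
      intros l Hl Hli. apply NT_lt; auto; lia.
    - intros [[i [Hi [H1 H3]]] HN]. split; auto.
      intros l Hl. destruct (Nat.eq_dec l i); [subst; auto|]. apply (bnd_mono _ _ _ H3). left; apply H1; auto. }
  rewrite <- (P_NT Sp X F Hiid HFc k); [|apply dsys_ex_range'; intros; unfold Eev; dsys_tac3].
  rewrite (sym_sum Sp X F Hiid k Eev 1 k 1); try lia.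
  - replace (S k - 1)%nat with k by lia. auto.
  - intros; unfold Eev; dsys_tac3.
  - intros; apply step_E; lia.
  - intros; apply (Edisj i i' x); auto.
Qed.

Lemma step_2 : P (ev (fun x => exists i, (S j <= i <= k)%nat /\ psi2 i x)) = INR (k - j) * P (ev Dev).
Proof.
  replace (ev Dev) with (ev (psi2 k)) by (apply ev_ext; intro w; unfold Dev, psi2; tauto).
  rewrite (sym_sum Sp X F Hiid k psi2 (S j) k k); auto.
  - intros; unfold psi2; dsys_tac3.
  - intros i Hi. apply (swap_eq Sp X F Hiid k _ _ i k); try lia; [unfold psi2; dsys_tac3|].
    intros x. unfold psi2. rewrite (top_swp x 1 k i k) by lia. rewrite (allb_swp_out ou x 1 j i k) by lia.
    replace (swp i k x k) with (x i) by (unfold swp; rewrite sig_t; auto). tauto.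
  - intros i i' x Hi Hi' Hii [H1 _] [H2 _]. specialize (H1 i' ltac:(lia) (not_eq_sym Hii)). specialize (H2 i ltac:(lia) Hii). lra.
Qed.

Lemma step_Q : P (ev Qev) = P (ev (fun x => exists i, (S j <= i <= k)%nat /\ psi2 i x)) +
                           P (ev (fun x => exists i, (1 <= i <= j)%nat /\ Eev i x)).
Proof.
  rewrite (P_NT Sp X F Hiid HFc k); [|unfold Qev; dsys_tac3].
  transitivity (P (ev (fun x => ((exists i, (S j <= i <= k)%nat /\ psi2 i x) \/ (exists i, (1 <= i <= j)%nat /\ Eev i x)) /\ NT k x))).
  { apply P_eq_ext; intro w; unfold Submission.ev. set (x := fun i => X i w). split.
    - intros [[H1 H2] H4]. split; auto. destruct (argmax x 1 k ltac:(lia)) as [i [Hi Hmax]].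
      assert (Ht : top x 1 k i) by (intros l Hl Hli; apply NT_lt; auto; lia).
      destruct (Compare_dec.le_dec i j).
      + right. exists i. split; [lia|]. split; auto. apply H1; lia.
      + left. exists i. split; [lia|]. split; [auto|split; auto]. apply H2; lia.
    - intros [[[i [Hi [H1 [H2 H3]]]]|[i [Hi [H1 H3]]]] HN]; split; auto; split; auto.
      + intros l Hl. destruct (Nat.eq_dec l i); [subst; auto|]. apply (bnd_mono _ _ _ H3). left; apply H1; auto; lia.
      + intros l Hl. apply (bnd_mono _ _ _ H3). destruct (Nat.eq_dec l i); [subst; lra|]. left; apply H1; auto; lia.
      + intros l Hl. apply Hmono. apply (bnd_mono _ _ _ H3). left; apply H1; lia. }
  rewrite <- (P_NT Sp X F Hiid HFc k).
  - unfold Submission.ev. rewrite <- P_add2.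
    + apply P_eq_ext; intro w; tauto.
    + apply (dsys_meas Sp X F Hiid k (fun x => exists i, (S j <= i <= k)%nat /\ psi2 i x)).
      apply dsys_ex_range'; intros; unfold psi2; dsys_tac3.
    + apply (dsys_meas Sp X F Hiid k (fun x => exists i, (1 <= i <= j)%nat /\ Eev i x)).
      apply dsys_ex_range'; intros; unfold Eev; dsys_tac3.
    + intros w [i [Hi [H1 _]]] [i' [Hi' [H2 _]]]. 
      specialize (H1 i' ltac:(lia) ltac:(lia)). specialize (H2 i ltac:(lia) ltac:(lia)). lra.
  - apply dsys_or; apply dsys_ex_range'; intros; [unfold psi2|unfold Eev]; dsys_tac3.
Qed.

Lemma core_formula : INR j * INR (k - j) * P (ev Tev) = P (ev Qev) - INR j / INR k * P (ev (allb ou 1 k)).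
Proof.
  rewrite step_Q, step_2, step_Ej, step_Ek, step1.
  assert (0 < INR k) by (apply lt_0_INR; lia). field. lra.
Qed.

End Core2.

Lemma prod1n_low A B j n : (n <= j)%nat -> prod1n (fun i => if Nat.leb i j then A else B) n = A ^ n.
Proof.
  induction n; intros H; cbn [prod1n pow]; auto. rewrite IHn; [|lia]. destruct (Nat.leb_spec (S n) j); [ring|lia].
Qed.

Lemma prod1n_split A B j n : (j <= n)%nat -> prod1n (fun i => if Nat.leb i j then A else B) n = A ^ j * B ^ (n - j).
Proof.
  intros H. induction H.
  - rewrite prod1n_low; auto. rewrite Nat.sub_diag. simpl; ring.
  - cbn [prod1n]. rewrite IHle. destruct (Nat.leb_spec (S m) j); [lia|].
    replace (S m - j)%nat with (S (m - j)) by lia. simpl; ring.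
Qed.

Lemma prod1n_const A n : prod1n (fun _ => A) n = A ^ n.
Proof. induction n; simpl; auto. rewrite IHn; ring. Qed.

Section Final.
Context {Omega : Type} (Sp : ProbSpace Omega) (X : nat -> Omega -> R) (F : R -> R).
Hypothesis Hiid : iid_with_cdf Sp X F.
Hypothesis HFc : continuity F.
Notation P := (prob Sp).
Notation ev := (ev X).

Lemma rec_top m w : is_record X m w <-> top (fun i => X i w) 1 m m.
Proof.
  unfold is_record, top. split.
  - intros H l Hl Hlm. apply H; lia.
  - intros H i Hi. apply H; lia.
Qed.

Lemma P_rec j k : (1 <= j)%nat -> (j < k)%nat ->
  P (fun w => is_record X j w /\ is_record X k w) = 1 / (INR j * INR k).
Proof.
  intros Hj Hjk.
  pose proof (core_formula Sp X F Hiid HFc j k None None Hj Hjk (fun r H => H)) as H.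
  assert (E1 : P (ev (Qev j k None None)) = 1).
  { rewrite <- (prob_full _ Sp). apply P_eq_ext; intro w; unfold Submission.ev, Qev, allb, bnd; split; auto. }
  assert (E2 : P (ev (allb None 1 k)) = 1).
  { rewrite <- (prob_full _ Sp). apply P_eq_ext; intro w; unfold Submission.ev, allb, bnd; split; auto. }
  rewrite E1, E2 in H.
  assert (E3 : P (fun w => is_record X j w /\ is_record X k w) = P (ev (Tev j k None None))).
  { apply P_eq_ext; intro w. unfold Submission.ev, Tev, bnd. rewrite !rec_top. tauto. }
  rewrite E3.
  assert (0 < INR j) by (apply lt_0_INR; lia). assert (0 < INR k) by (apply lt_0_INR; lia).
  assert (0 < INR (k - j)) by (apply lt_0_INR; lia).
  rewrite minus_INR in * by lia.
  apply Rmult_eq_reg_l with (INR j * (INR k - INR j)); [|nra].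
  rewrite H. field. split; lra.
Qed.

Lemma cond_formula j k u v : (1 <= j)%nat -> (j < k)%nat -> u <= v ->
  cond_prob Sp (fun w => X j w <= u /\ X k w <= v) (fun w => is_record X j w /\ is_record X k w)
  = (INR k * F u ^ j * F v ^ (k - j) - INR j * F u ^ k) / INR (k - j).
Proof.
  intros Hj Hjk Huv. unfold cond_prob. rewrite P_rec; auto.
  pose proof (core_formula Sp X F Hiid HFc j k (Some u) (Some v) Hj Hjk (fun r H => Rle_trans _ _ _ H Huv)) as H.
  assert (E1 : P (ev (Qev j k (Some u) (Some v))) = F u ^ j * F v ^ (k - j)).
  { rewrite <- prod1n_split by lia.
    rewrite (prod1n_ext _ (fun i => F (if Nat.leb i j then u else v))) by (intros; destruct (Nat.leb i j); auto).
    rewrite <- (P_rect Sp X F Hiid k (fun i => if Nat.leb i j then u else v)).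
    apply P_eq_ext; intro w; unfold Submission.ev, Qev, allb, bnd, rect; split.
    - intros [H1 H2] i Hi. destruct (Nat.leb_spec i j); [apply H1|apply H2]; lia.
    - intros H1; split; intros i Hi; specialize (H1 i ltac:(lia)); destruct (Nat.leb_spec i j); auto; lia. }
  assert (E2 : P (ev (allb (Some u) 1 k)) = F u ^ k).
  { rewrite <- prod1n_const. rewrite <- (P_rect Sp X F Hiid k (fun _ => u)).
    apply P_eq_ext; intro w; unfold Submission.ev, allb, bnd, rect; tauto. }
  rewrite E1, E2 in H.
  assert (E3 : P (fun w => (X j w <= u /\ X k w <= v) /\ (is_record X j w /\ is_record X k w)) = P (ev (Tev j k (Some u) (Some v)))).
  { apply P_eq_ext; intro w. unfold Submission.ev, Tev, bnd. rewrite !rec_top. tauto. }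
  rewrite E3.
  assert (0 < INR j) by (apply lt_0_INR; lia). assert (0 < INR k) by (apply lt_0_INR; lia).
  assert (0 < INR (k - j)) by (apply lt_0_INR; lia).
  set (p := P (ev (Tev j k (Some u) (Some v)))) in *.
  assert (p = (F u ^ j * F v ^ (k - j) - INR j / INR k * F u ^ k) / (INR j * INR (k - j))).
  { rewrite <- H. field. lra. }
  rewrite H3. field. lra.
Qed.

End Final.

Lemma cv_eventually (u v : nat -> R) l N : (forall n, (n >= N)%nat -> u n = v n) -> Un_cv u l -> Un_cv v l.
Proof.
  intros H Hu eps He. destruct (Hu eps He) as [N1 HN1]. exists (Nat.max N N1). intros n Hn.
  rewrite <- H by lia. apply HN1; lia.
Qed.

Lemma cv_inv (u : nat -> R) l : l <> 0 -> Un_cv u l -> Un_cv (fun n => / u n) (/ l).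
Proof.
  intros Hl Hu.
  exact (continuity_seq (/ id)%F u l (continuity_pt_inv id l (derivable_continuous_pt _ _ (derivable_pt_id l)) Hl) Hu).
Qed.

Lemma pow_le1 p n : 0 <= p <= 1 -> p ^ n <= 1.
Proof. intros. rewrite <- (pow1 n). apply pow_incr; lra. Qed.

Lemma pow_le_exp (p : R) a b : 0 <= p <= 1 -> (a <= b)%nat -> p ^ b <= p ^ a.
Proof.
  intros Hp Hab. replace b with (a + (b - a))%nat by lia. rewrite pow_add.
  assert (0 <= p ^ a) by (apply pow_le; lra).
  pose proof (pow_le1 p (b - a) Hp). pose proof (pow_le p (b - a) (proj1 Hp)). nra.
Qed.

Lemma pow_lim (p : nat -> R) (m : nat -> nat) g c :
  (forall n, 0 <= p n <= 1) -> Un_cv (fun n => p n ^ n) g ->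
  Un_cv (fun n => INR (m n) / INR n) c -> 0 < c ->
  Un_cv (fun n => p n ^ (m n)) (rpow g c).
Proof.
  intros Hp Hg Hm Hc.
  assert (Hg0 : 0 <= g).
  { destruct (Rle_dec 0 g) as [|Hn]; auto. exfalso. destruct (Hg (- g) ltac:(lra)) as [N HN].
    specialize (HN N (le_n _)). unfold R_dist in HN. pose proof (pow_le (p N) N (proj1 (Hp N))).
    apply Rabs_def2 in HN. lra. }
  destruct (Rle_lt_or_eq_dec _ _ Hg0) as [Hgp|Hg00].
  -
    unfold rpow. destruct (Rle_dec g 0) as [|_]; [lra|]. unfold Rpower.
    destruct (Hg (g / 2) ltac:(lra)) as [N0 HN0].
    apply (cv_eventually (fun n => exp ((INR (m n) / INR n) * ln (p n ^ n))) _ _ (Nat.max N0 1)).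
    + intros n Hn. specialize (HN0 n ltac:(lia)). unfold R_dist in HN0. apply Rabs_def2 in HN0.
      assert (Hpn : 0 < p n).
      { destruct (Hp n) as [[H|H] _]; auto. rewrite <- H, pow_i in HN0; [lra|lia]. }
      rewrite ln_pow by auto. rewrite <- (Rpower_pow (m n) (p n)) by auto. unfold Rpower. f_equal.
      assert (0 < INR n) by (apply lt_0_INR; lia). field. lra.
    + apply (continuity_seq exp). { apply derivable_continuous_pt, derivable_pt_exp. }
      apply CV_mult; auto.
      apply (continuity_seq ln); auto.
      apply derivable_continuous_pt. exists (/ g). apply derivable_pt_lim_ln; auto.
  -
    subst g. unfold rpow. destruct (Rle_dec 0 0) as [_|]; [|lra].
    intros eps He.
    set (e := Rmin (eps/2) (1/2)).
    assert (He0 : 0 < e) by (unfold e; apply Rmin_glb_lt; lra).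
    assert (He1 : e < 1) by (unfold e; pose proof (Rmin_r (eps/2) (1/2)); lra).
    destruct (archimed (2 / c)) as [HK _].
    set (K := Z.to_nat (up (2 / c))).
    assert (HKc : 2 / c < INR K).
    { unfold K. rewrite INR_IZR_INZ, ZifyInst.of_nat_to_nat_eq.
      assert (0 < 2 / c) by (apply Rdiv_lt_0_compat; lra).
      assert (IZR (up (2/c)) <= IZR (Z.max 0 (up (2/c)))) by (apply IZR_le; lia). lra. }
    assert (HK0 : 0 < INR K) by (assert (0 < 2 / c) by (apply Rdiv_lt_0_compat; lra); lra).
    destruct (Hm (c / 2) ltac:(lra)) as [N1 HN1].
    destruct (Hg (e ^ K) (pow_lt _ _ He0)) as [N2 HN2].
    exists (Nat.max 1 (Nat.max N1 N2)). intros n Hn.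
    unfold R_dist. rewrite Rminus_0_r. rewrite Rabs_right by (apply Rle_ge, pow_le; apply Hp).
    apply Rle_lt_trans with e; [|unfold e; pose proof (Rmin_l (eps/2) (1/2)); lra].
    specialize (HN1 n ltac:(lia)). specialize (HN2 n ltac:(lia)).
    unfold R_dist in HN1, HN2. rewrite Rminus_0_r in HN2. rewrite Rabs_right in HN2 by (apply Rle_ge, pow_le; apply Hp).
    apply Rabs_def2 in HN1.
    assert (Hn0 : 0 < INR n) by (apply lt_0_INR; lia).
    assert (HmK : (n <= K * m n)%nat).
    { apply INR_le. rewrite mult_INR.
      assert (c / 2 < INR (m n) / INR n) by lra.
      assert (c / 2 * INR n < INR (m n)).
      { apply Rmult_lt_reg_r with (/ INR n). apply Rinv_0_lt_compat; auto.
        rewrite Rmult_assoc, Rinv_r, Rmult_1_r; [|lra]. unfold Rdiv in H. lra. }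
      assert (2 <= INR K * c).
      { apply Rmult_lt_compat_r with (r := c) in HKc; auto. unfold Rdiv in HKc. rewrite Rmult_assoc, Rinv_l in HKc; lra. }
      assert (0 <= INR (m n)) by apply pos_INR. nra. }
    destruct (Rle_dec (p n ^ m n) e) as [|Hgt]; auto.
    exfalso.
    assert (e ^ K <= (p n ^ m n) ^ K) by (apply pow_incr; lra).
    rewrite <- pow_mult, Nat.mul_comm in H.
    pose proof (pow_le_exp (p n) n (K * m n) (Hp n) HmK). lra.
Qed.

Lemma rpow_plus x a b : rpow x a * rpow x b = rpow x (a + b).
Proof.
  unfold rpow. destruct (Rle_dec x 0); [ring|]. rewrite Rpower_plus. ring.
Qed.

Lemma div_le_iff x a b y : 0 < a -> ((x - b) / a <= y <-> x <= a * y + b).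
Proof.
  intros Ha. split; intros H.
  - apply Rmult_le_compat_l with (r := a) in H; [|lra]. unfold Rdiv in H.
    replace (a * ((x - b) * / a)) with (x - b) in H by (field; lra). lra.
  - apply Rmult_le_reg_l with a; auto. unfold Rdiv. replace (a * ((x - b) * / a)) with (x - b) by (field; lra). lra.
Qed.

Theorem corollary10 (Omega : Type) (S : ProbSpace Omega) (X : nat -> Omega -> R)
  (F G : R -> R) (a b : nat -> R) (j k : nat -> nat) (l1 l2 : R) :
  iid_with_cdf S X F ->
  continuity F ->
  distribution_function G -> non_degenerate G -> continuity G ->
  in_domain_of_attraction F G a b ->
  (forall n, (j n < k n)%nat) ->
  Un_cv (fun n => INR (j n) / INR n) l1 -> 0 < l1 ->
  Un_cv (fun n => INR (k n) / INR n) l2 -> l1 < l2 ->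
  forall y1 y2 : R,
    Un_cv (fun n =>
      cond_prob S
        (fun w => (X (j n) w - b n) / a n <= y1 /\ (X (k n) w - b n) / a n <= y2)
        (fun w => is_record X (j n) w /\ is_record X (k n) w))
      (G_lim G l1 l2 y1 y2).
Proof.
  intros Hiid HFc _ _ _ [Ha Hdom] Hjk Hj Hl1 Hk Hl12 y1 y2.
  destruct (Hj (l1 / 2) ltac:(lra)) as [N0 HN0].
  assert (Hj1 : forall n, (n >= N0)%nat -> (1 <= j n)%nat /\ (1 <= n)%nat).
  { intros n Hn. specialize (HN0 n Hn). unfold R_dist in HN0. apply Rabs_def2 in HN0.
    destruct (j n) eqn:E; [simpl in HN0; unfold Rdiv in HN0; rewrite Rmult_0_l in HN0; lra|].
    destruct n; [simpl in HN0; unfold Rdiv in HN0; rewrite Rinv_0, Rmult_0_r in HN0; lra|]. lia. }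
  set (p := fun n => F (a n * y1 + b n)).
  set (q := fun n => F (a n * y2 + b n)).
  assert (HFr : forall s, 0 <= F s <= 1) by (apply (F_range S X F Hiid)).
  assert (Hkj : Un_cv (fun n => INR (k n - j n) / INR n) (l2 - l1)).
  { apply (cv_eventually (fun n => INR (k n) / INR n - INR (j n) / INR n) _ _ O).
    - intros n _. rewrite minus_INR by (specialize (Hjk n); lia). unfold Rdiv; ring.
    - apply CV_minus; auto. }
  destruct (Rlt_dec y1 y2) as [Hlt|Hge].
  -
    set (L := l2 * / (l2 - l1) * rpow (G y1) l1 * rpow (G y2) (l2 - l1) - l1 * / (l2 - l1) * rpow (G y1) l2).
    replace (G_lim G l1 l2 y1 y2) with L.
    2:{ unfold G_lim, L. destruct (Rlt_dec y1 y2); [|lra].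
        replace (rpow (G y1) l2) with (rpow (G y1) l1 * rpow (G y1) (l2 - l1)) by (rewrite rpow_plus; f_equal; ring). field. lra. }
    apply (cv_eventually (fun n => INR (k n) / INR n * / (INR (k n - j n) / INR n) * p n ^ j n * q n ^ (k n - j n)
                                  - INR (j n) / INR n * / (INR (k n - j n) / INR n) * p n ^ k n) _ _ N0).
    + intros n Hn. destruct (Hj1 n Hn) as [Hjn Hn1].
      assert (Hu : a n * y1 + b n <= a n * y2 + b n) by (pose proof (Ha n); nra).
      transitivity (cond_prob S (fun w => X (j n) w <= a n * y1 + b n /\ X (k n) w <= a n * y2 + b n)
                      (fun w => is_record X (j n) w /\ is_record X (k n) w)).
      * rewrite (cond_formula S X F Hiid HFc (j n) (k n)); auto.
        unfold p, q. assert (0 < INR n) by (apply lt_0_INR; lia).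
        assert (0 < INR (k n - j n)) by (apply lt_0_INR; specialize (Hjk n); lia).
        field. lra.
      * unfold cond_prob. f_equal. apply (P_eq_ext S). intros w. rewrite !div_le_iff by apply Ha. tauto.
    + apply CV_minus.
      * apply CV_mult; [apply CV_mult; [apply CV_mult|]|].
        -- auto.
        -- apply cv_inv; auto; lra.
        -- apply (pow_lim p j); [intros; apply HFr|exact (Hdom y1)|auto|auto].
        -- apply (pow_lim q (fun n => k n - j n)%nat); [intros; apply HFr|exact (Hdom y2)|auto|lra].
      * apply CV_mult; [apply CV_mult|].
        -- auto.
        -- apply cv_inv; auto; lra.
        -- apply (pow_lim p k); [intros; apply HFr|exact (Hdom y1)|auto|lra].
  -
    replace (G_lim G l1 l2 y1 y2) with (rpow (G y2) l2).
    2:{ unfold G_lim. destruct (Rlt_dec y1 y2); [lra|auto]. }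
    apply (cv_eventually (fun n => q n ^ k n) _ _ N0).
    + intros n Hn. destruct (Hj1 n Hn) as [Hjn Hn1].
      transitivity (cond_prob S (fun w => X (j n) w <= a n * y2 + b n /\ X (k n) w <= a n * y2 + b n)
                      (fun w => is_record X (j n) w /\ is_record X (k n) w)).
      * rewrite (cond_formula S X F Hiid HFc (j n) (k n)); try lra; auto.
        unfold q. assert (0 < INR (k n - j n)) by (apply lt_0_INR; specialize (Hjk n); lia).
        rewrite minus_INR in * by (specialize (Hjk n); lia).
        replace (F (a n * y2 + b n) ^ k n) with (F (a n * y2 + b n) ^ j n * F (a n * y2 + b n) ^ (k n - j n)).
        -- field. lra.
        -- rewrite <- pow_add. f_equal. specialize (Hjk n); lia.
      * unfold cond_prob. f_equal. apply (P_eq_ext S). intros w. rewrite !div_le_iff by apply Ha.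
        assert (Hy : a n * y2 + b n <= a n * y1 + b n) by (pose proof (Ha n); nra).
        split.
        -- intros [[H1 H2] [H3 H4]].
           assert (X (j n) w < X (k n) w) by (apply H4; specialize (Hjk n); lia). repeat split; auto; lra.
        -- intros [[H1 H2] [H3 H4]].
           assert (X (j n) w < X (k n) w) by (apply H4; specialize (Hjk n); lia). repeat split; auto; lra.
    + apply (pow_lim q k); [intros; apply HFr|exact (Hdom y2)|auto|lra].
Qed.
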